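(* Assume the setting below and let $\lambda>0$ with $\mu_+(\max\{\lambda,1\})\le1$. Assume (A1), (A4), (A5), (A6). If $r$ is a regular equilibrium solution with $r(1)=\lambda$, then $$\alpha_0(\rho,r(\rho))\,\tau(\rho)\le r'(\rho)\le\alpha_1(\rho,r(\rho))\,\tau(\rho)\qquad\text{for all }\rho\in(0,1].$$
   Context: Setting: $n\ge2$; $\kappa$ continuous on $[0,\infty)$, $\kappa_\pm=\max\{\pm\kappa,0\}$, $\mu_\pm(\lambda)=\int_0^\lambda s\kappa_\pm(s)ds$; $f$ solves $f''+\kappa f=0$, $f(0)=0$, $f'(0)=1$. Let $\phi,h:(0,\infty)\to\mathbb R$ and $\Phi(v_1,\dots,v_n)=\sum_{i=1}^n\phi(v_i)+h(v_1\cdots v_n)$. For a function $r$ on $(0,1]$ put $\tau(\rho)=f(r(\rho))/f(\rho)$. An equilibrium solution with $r(1)=\lambda$ is $r\in C^1(0,1]$, twice differentiable on $(0,1)$, with $r'>0$ on $(0,1]$, $r(0):=\lim_{\rho\to0^+}r(\rho)\ge0$, $r(1)=\lambda$, and for $\rho\in(0,1)$ $$f(\rho)\big[\phi''(r')+h''(r'\tau^{n-1})\tau^{2(n-1)}\big]r''=(n-1)\big[f'(r)\phi'(\tau)-f'(\rho)\phi'(r')\big]-(n-1)\big(f'(r)r'-f'(\rho)\tau\big)h''(r'\tau^{n-1})\,r'\tau^{2n-3}$$ (with $r=r(\rho)$, $r'=r'(\rho)$, $\tau=\tau(\rho)$). It is regular if $r(0)=0$. Assumptions: (A1) $h$ is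 $C^2$ and strictly convex. (A4) $\phi:(0,\infty)\to(0,\infty)$ is $C^2$ and convex. (A5) $v\mapsto v\phi'(v)$ is increasing. (A6) there is $t_0\ge0$ with $\phi'(t_0)=0$; with $q_1(s)=\sup_{v>t_0}\phi'(v)/\phi'(sv)$ for $s\ge1$ and $q_0(s)=\inf_{v>t_0/s}\phi'(v)/\phi'(sv)$ for $s\in(0,1]$, one has $q_1\in C^1[1,\infty)$, $q_0\in C^1(0,1]$, $\lim_{s\to\infty}q_1(s)=0$, $\lim_{s\to0^+}q_0(s)=\infty$, $q_1'<0$ on $[1,\infty)$ and $q_0'<0$ on $(0,1]$ (so $q_1(1)=q_0(1)=1$ and $q_1^{-1}:(0,1]\to[1,\infty)$, $q_0^{-1}:[1,\infty)\to(0,1]$ exist). Notation: $b_0(\rho)=\min_{0\le s\le\rho}f'(s)$, $b_1(\rho)=\max_{0\le s\le\rho}f'(s)$; $\alpha_1(\rho,s)=\max\{b_1(\rho)/b_0(s),\,q_1^{-1}(b_0(\rho)/b_1(s))\}$ and $\alpha_0(\rho,s)=\min\{b_0(\rho)/b_1(s),\,q_0^{-1}(b_1(\rho)/b_0(s))\}$ for $(\rho,s)\in[0,1]\times[0,\lambda]$. *)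

(* Defs.v *)
From Stdlib Require Import Reals Lra ClassicalEpsilon.
Open Scope R_scope.

Definition is_min_on (g : R -> R) (a b m : R) : Prop :=
  (exists s, a <= s <= b /\ g s = m) /\ (forall s, a <= s <= b -> m <= g s).
Definition is_max_on (g : R -> R) (a b m : R) : Prop :=
  (exists s, a <= s <= b /\ g s = m) /\ (forall s, a <= s <= b -> g s <= m).

Definition is_glb (E : R -> Prop) (m : R) : Prop :=
  (forall y, E y -> m <= y) /\ (forall b, (forall y, E y -> b <= y) -> b <= m).

Definition b0 (df : R -> R) (rho : R) : R :=
  epsilon (inhabits 0) (fun m => is_min_on df 0 rho m).
Definition b1 (df : R -> R) (rho : R) : R :=
  epsilon (inhabits 0) (fun m => is_max_on df 0 rho m).

(* alpha_1(rho,s), alpha_0(rho,s); q1inv, q0inv are the inverse functions of q_1, q_0 *)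
Definition alpha1 (df q1inv : R -> R) (rho s : R) : R :=
  Rmax (b1 df rho / b0 df s) (q1inv (b0 df rho / b1 df s)).
Definition alpha0 (df q0inv : R -> R) (rho s : R) : R :=
  Rmin (b0 df rho / b1 df s) (q0inv (b1 df rho / b0 df s)).

Definition convex_pos (g : R -> R) : Prop :=
  forall x y t, 0 < x -> 0 < y -> 0 <= t <= 1 ->
    g (t * x + (1 - t) * y) <= t * g x + (1 - t) * g y.
Definition strictly_convex_pos (g : R -> R) : Prop :=
  forall x y t, 0 < x -> 0 < y -> x <> y -> 0 < t < 1 ->
    g (t * x + (1 - t) * y) < t * g x + (1 - t) * g y.

(* Main.v *)
Require Import Defs.
From Stdlib Require Import Reals Lra Lia Classical ClassicalEpsilon.
From Coquelicot Require Coquelicot.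
Open Scope R_scope.

Definition cont_in (g : R -> R) (a b : R) : Prop :=
  forall x, a <= x <= b -> forall eps, 0 < eps ->
    exists d, 0 < d /\ forall y, a <= y <= b -> Rabs (y - x) < d -> Rabs (g y - g x) < eps.

Lemma cpt_cont_in_pt (g : R -> R) a b x :
  continuity_pt g x -> forall eps, 0 < eps ->
    exists d, 0 < d /\ forall y, a <= y <= b -> Rabs (y - x) < d -> Rabs (g y - g x) < eps.
Proof.
  intros H eps He. destruct (H eps He) as [d [Hd Hy]]. exists d; split; [lra|].
  intros y _ Hyx. destruct (Req_dec y x) as [->|Hne].
  - rewrite Rminus_diag, Rabs_R0; lra.
  - apply (Hy y). split; [split; [exact I| auto]| exact Hyx].
Qed.

Lemma deriv_cont_in g dg a b :
  (forall x, a <= x <= b -> derivable_pt_lim g x (dg x)) -> cont_in g a b.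
Proof.
  intros H x Hx. apply cpt_cont_in_pt. apply derivable_continuous_pt.
  exists (dg x). apply H; auto.
Qed.

Definition clamp (a b x : R) := Rmax a (Rmin b x).

Lemma clamp_in a b x : a <= x <= b -> clamp a b x = x.
Proof. intros. unfold clamp. rewrite Rmin_right by lra. rewrite Rmax_right; lra. Qed.

Lemma clamp_bounds a b x : a <= b -> a <= clamp a b x <= b.
Proof. intros. unfold clamp. unfold Rmax, Rmin. repeat destruct Rle_dec; lra. Qed.

Lemma clamp_lip a b x y : a <= b -> Rabs (clamp a b y - clamp a b x) <= Rabs (y - x).
Proof. intros. unfold clamp, Rmax, Rmin. repeat destruct Rle_dec;
  unfold Rabs; repeat destruct Rcase_abs; lra. Qed.

Lemma cont_in_clamp g a b x : a <= b -> cont_in g a b -> a <= x <= b ->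
  continuity_pt (fun y => g (clamp a b y)) x.
Proof.
  intros Hab H Hx eps He. destruct (H x Hx eps He) as [d [Hd Hy]].
  exists d. split; [lra|]. intros y [_ Hyd]. simpl in *. unfold R_dist in *.
  rewrite (clamp_in a b x Hx). apply Hy. apply clamp_bounds; auto.
  rewrite <- (clamp_in a b x Hx) at 1. eapply Rle_lt_trans. apply clamp_lip; auto. auto.
Qed.

Lemma deriv_local (g h : R -> R) x l d : 0 < d ->
  (forall y, Rabs (y - x) < d -> g y = h y) -> derivable_pt_lim g x l -> derivable_pt_lim h x l.
Proof.
  intros Hd Heq H eps He. destruct (H eps He) as [del Hdel].
  assert (Hm : 0 < Rmin del d) by (apply Rmin_pos; [apply cond_pos|lra]).
  exists (mkposreal _ Hm). intros hh Hh Hhd. simpl in Hhd.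
  rewrite <- !Heq. apply Hdel; auto. eapply Rlt_le_trans; [exact Hhd| apply Rmin_l].
  rewrite Rminus_diag, Rabs_R0; lra.
  replace (x + hh - x) with hh by ring. eapply Rlt_le_trans; [exact Hhd| apply Rmin_r].
Qed.

Lemma MVT_in g dg a b : a < b -> cont_in g a b ->
  (forall x, a < x < b -> derivable_pt_lim g x (dg x)) ->
  exists c, a < c < b /\ g b - g a = dg c * (b - a).
Proof.
  intros Hab Hc Hd.
  set (gc := fun y => g (clamp a b y)).
  assert (Hdc : forall x, a < x < b -> derivable_pt_lim gc x (dg x)).
  { intros x Hx. apply (deriv_local g gc x _ (Rmin (x - a) (b - x))).
    apply Rmin_pos; lra.
    intros y Hy. unfold gc. rewrite clamp_in; auto.
    assert (Rabs (y - x) < x - a) by (eapply Rlt_le_trans; [exact Hy| apply Rmin_l]).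
    assert (Rabs (y - x) < b - x) by (eapply Rlt_le_trans; [exact Hy| apply Rmin_r]).
    unfold Rabs in *; destruct Rcase_abs; lra.
    apply Hd; auto. }
  assert (pr1 : forall c, a < c < b -> derivable_pt gc c).
  { intros c Hc'. exists (dg c). apply Hdc; auto. }
  assert (pr2 : forall c, a < c < b -> derivable_pt id c).
  { intros c _. apply derivable_pt_id. }
  destruct (MVT gc id a b pr1 pr2 Hab) as [c [P Hc']].
  - intros c Hc'. apply cont_in_clamp; auto; lra.
  - intros c _. apply derivable_continuous_pt, derivable_pt_id.
  - exists c. split; auto. rewrite (derive_pt_eq_0 _ _ _ (pr1 c P) (Hdc c P)) in Hc'.
    rewrite (derive_pt_eq_0 _ _ _ (pr2 c P) (derivable_pt_lim_id c)) in Hc'.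
    unfold gc, id in Hc'. rewrite !clamp_in in Hc' by lra. lra.
Qed.

Lemma mono_ge g dg a b : a <= b -> cont_in g a b ->
  (forall x, a < x < b -> derivable_pt_lim g x (dg x)) ->
  (forall x, a < x < b -> 0 <= dg x) -> g a <= g b.
Proof.
  intros Hab Hc Hd Hp. destruct (Req_dec a b) as [->|Hne]; [lra|].
  destruct (MVT_in g dg a b) as [c [Hc' He]]; auto; try lra.
  specialize (Hp c Hc'). nra.
Qed.

Lemma mono_le g dg a b : a <= b -> cont_in g a b ->
  (forall x, a < x < b -> derivable_pt_lim g x (dg x)) ->
  (forall x, a < x < b -> dg x <= 0) -> g b <= g a.
Proof.
  intros Hab Hc Hd Hp. destruct (Req_dec a b) as [->|Hne]; [lra|].
  destruct (MVT_in g dg a b) as [c [Hc' He]]; auto; try lra.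
  specialize (Hp c Hc'). nra.
Qed.

Lemma mono_gt g dg a b : a < b -> cont_in g a b ->
  (forall x, a < x < b -> derivable_pt_lim g x (dg x)) ->
  (forall x, a < x < b -> 0 < dg x) -> g a < g b.
Proof.
  intros Hab Hc Hd Hp.
  destruct (MVT_in g dg a b) as [c [Hc' He]]; auto; try lra.
  specialize (Hp c Hc'). nra.
Qed.

Lemma cpt_near g x eps : continuity_pt g x -> 0 < eps ->
  exists d, 0 < d /\ forall z, Rabs (z - x) < d -> Rabs (g z - g x) < eps.
Proof.
  intros H He. destruct (H eps He) as [d [Hd Hy]]. exists d; split; [lra|].
  intros z Hz. destruct (Req_dec z x) as [->|Hne].
  - rewrite Rminus_diag, Rabs_R0; lra.
  - apply (Hy z). split; [split; [exact I| auto]| exact Hz].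
Qed.

Lemma barrier g dg c t y : t < y ->
  (forall x, t <= x <= y -> derivable_pt_lim g x (dg x)) ->
  (forall x, t <= x <= y -> c < g x -> dg x <= 0) ->
  c < g y -> g y <= g t.
Proof.
  intros Hty Hd Hneg Hy.
  destruct (Rle_or_lt (g y) (g t)) as [H|H]; [exact H|exfalso].
  set (d := (Rmax c (g t) + g y) / 2).
  assert (Hcd : c < d /\ g t < d /\ d < g y).
  { unfold d, Rmax; destruct Rle_dec; lra. }
  set (E := fun x => t <= x <= y /\ g x <= d).
  assert (Hb : bound E). { exists y. intros x [Hx _]; lra. }
  assert (He : exists x, E x). { exists t. split; lra. }
  destruct (completeness E Hb He) as [v [Hub Hlub]].
  assert (Htv : t <= v). { apply Hub. split; lra. }
  assert (Hvy : v <= y). { apply Hlub. intros x [Hx _]; lra. }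
  assert (Hcv : forall z, t <= z <= y -> continuity_pt g z).
  { intros z Hz. apply derivable_continuous_pt. exists (dg z). apply Hd; auto. }
  assert (Hgv1 : g v <= d).
  { destruct (Rle_or_lt (g v) d) as [|Hlt]; auto. exfalso.
    destruct (cpt_near g v (g v - d) (Hcv v (conj Htv Hvy))) as [del [Hdel Hz]]; [lra|].
    assert (v <= v - del); [|lra].
    apply Hlub. intros x [Hx Hgx]. assert (x <= v) by (apply Hub; split; auto).
    destruct (Rle_or_lt x (v - del)); auto.
    assert (Rabs (x - v) < del) by (unfold Rabs; destruct Rcase_abs; lra).
    specialize (Hz x H2). unfold Rabs in Hz; destruct Rcase_abs in Hz; lra. }
  assert (Hgv2 : d <= g v).
  { destruct (Rle_or_lt d (g v)) as [|Hlt]; auto. exfalso.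
    assert (Hvy' : v < y) by (destruct (Req_dec v y); subst; lra).
    destruct (cpt_near g v (d - g v) (Hcv v (conj Htv Hvy))) as [del [Hdel Hz]]; [lra|].
    set (x := v + Rmin del (y - v) / 2).
    assert (Hm : 0 < Rmin del (y - v)) by (apply Rmin_pos; lra).
    assert (Hm1 : Rmin del (y - v) <= del) by apply Rmin_l.
    assert (Hm2 : Rmin del (y - v) <= y - v) by apply Rmin_r.
    assert (E x).
    { split; [unfold x; lra|]. assert (Rabs (x - v) < del) by (unfold x, Rabs; destruct Rcase_abs; lra).
      specialize (Hz x H0). unfold Rabs in Hz; destruct Rcase_abs in Hz; lra. }
    specialize (Hub x H0). unfold x in Hub. lra. }
  assert (Hvy' : v < y) by (destruct (Req_dec v y); subst; lra).
  destruct (MVT_cor2 g dg v y Hvy') as [cc [Hmv Hcc]].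
  { intros z Hz. apply Hd; lra. }
  assert (Hgcc : d < g cc).
  { destruct (Rle_or_lt (g cc) d) as [Hle|]; auto.
    assert (cc <= v) by (apply Hub; split; [lra|auto]). lra. }
  assert (dg cc <= 0) by (apply Hneg; lra).
  nra.
Qed.

Lemma Rdiv_le_0_compat a b : 0 <= a -> 0 < b -> 0 <= a / b.
Proof. intros. unfold Rdiv. apply Rmult_le_pos; auto. left; apply Rinv_0_lt_compat; auto. Qed.
Lemma Rdiv_le_1 a b : 0 < b -> a <= b -> a / b <= 1.
Proof. intros. apply (Rmult_le_reg_r b); auto. unfold Rdiv. rewrite Rmult_assoc, Rinv_l; lra. Qed.

Lemma convex_slope g x z y : convex_pos g -> 0 < x -> x < z -> z < y ->
  (g z - g x) / (z - x) <= (g y - g x) / (y - x) /\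
  (g y - g x) / (y - x) <= (g y - g z) / (y - z).
Proof.
  intros Hc Hx Hxz Hzy.
  set (t := (y - z) / (y - x)).
  assert (Ht : 0 <= t <= 1).
  { unfold t; split; [apply Rdiv_le_0_compat; lra|]. apply Rdiv_le_1; lra. }
  assert (Hz : t * x + (1 - t) * y = z). { unfold t. field. lra. }
  specialize (Hc x y t Hx ltac:(lra) Ht). rewrite Hz in Hc.
  assert (H1 : g z - g x <= (z - x) / (y - x) * (g y - g x)).
  { replace ((z - x) / (y - x)) with (1 - t) by (unfold t; field; lra). nra. }
  assert (H2 : (y - z) / (y - x) * (g y - g x) <= g y - g z).
  { fold t. nra. }
  split.
  - apply (Rmult_le_reg_r (z - x)); [lra|]. unfold Rdiv at 1. rewrite Rmult_assoc, Rinv_l, Rmult_1_r by lra.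
    replace ((g y - g x) / (y - x) * (z - x)) with ((z - x) / (y - x) * (g y - g x)) by (field; lra). lra.
  - apply (Rmult_le_reg_r (y - z)); [lra|]. unfold Rdiv at 2. rewrite Rmult_assoc, Rinv_l, Rmult_1_r by lra.
    replace ((g y - g x) / (y - x) * (y - z)) with ((y - z) / (y - x) * (g y - g x)) by (field; lra). lra.
Qed.

Lemma convex_deriv_mono g dg x y : convex_pos g ->
  (forall u, 0 < u -> derivable_pt_lim g u (dg u)) -> 0 < x -> x < y -> dg x <= dg y.
Proof.
  intros Hc Hd Hx Hxy.
  set (S := (g y - g x) / (y - x)).
  assert (A : dg x <= S).
  { destruct (Rle_or_lt (dg x) S) as [|Hlt]; auto. exfalso.
    destruct (Hd x Hx (dg x - S) ltac:(lra)) as [del Hdel].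
    set (h := Rmin del (y - x) / 2).
    assert (Hm : 0 < Rmin del (y - x)) by (apply Rmin_pos; [apply cond_pos|lra]).
    assert (Hm1 : Rmin del (y - x) <= del) by apply Rmin_l.
    assert (Hm2 : Rmin del (y - x) <= y - x) by apply Rmin_r.
    assert (Hh : 0 < h) by (unfold h; lra).
    specialize (Hdel h ltac:(lra) ltac:(rewrite Rabs_pos_eq; unfold h; lra)).
    destruct (convex_slope g x (x + h) y Hc Hx ltac:(lra) ltac:(unfold h; lra)) as [C1 _].
    replace (x + h - x) with h in C1 by ring. fold S in C1.
    unfold Rabs in Hdel; destruct Rcase_abs in Hdel; lra. }
  assert (B : S <= dg y).
  { destruct (Rle_or_lt S (dg y)) as [|Hlt]; auto. exfalso.
    destruct (Hd y ltac:(lra) (S - dg y) ltac:(lra)) as [del Hdel].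
    set (h := Rmin del (y - x) / 2).
    assert (Hm : 0 < Rmin del (y - x)) by (apply Rmin_pos; [apply cond_pos|lra]).
    assert (Hm1 : Rmin del (y - x) <= del) by apply Rmin_l.
    assert (Hm2 : Rmin del (y - x) <= y - x) by apply Rmin_r.
    assert (Hh : 0 < h) by (unfold h; lra).
    specialize (Hdel (- h) ltac:(lra) ltac:(rewrite Rabs_Ropp, Rabs_pos_eq; unfold h; lra)).
    destruct (convex_slope g x (y - h) y Hc Hx ltac:(unfold h; lra) ltac:(lra)) as [_ C2].
    fold S in C2. replace (y - (y - h)) with h in C2 by ring.
    replace (y + - h) with (y - h) in Hdel by ring.
    replace ((g (y - h) - g y) / - h) with ((g y - g (y - h)) / h) in Hdel by (field; lra).
    unfold Rabs in Hdel; destruct Rcase_abs in Hdel; lra. }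
  lra.
Qed.

Lemma convex_d2_nonneg g dg d2 x : convex_pos g ->
  (forall u, 0 < u -> derivable_pt_lim g u (dg u)) -> 0 < x ->
  derivable_pt_lim dg x (d2 x) -> 0 <= d2 x.
Proof.
  intros Hc Hd Hx H2.
  destruct (Rle_or_lt 0 (d2 x)) as [|Hlt]; auto. exfalso.
  destruct (H2 (- d2 x) ltac:(lra)) as [del Hdel].
  set (h := del / 2).
  assert (Hh : 0 < h) by (unfold h; generalize (cond_pos del); lra).
  assert (Hdp := cond_pos del).
  specialize (Hdel h ltac:(lra) ltac:(rewrite Rabs_pos_eq; unfold h; lra)).
  assert (dg x <= dg (x + h)) by (apply (convex_deriv_mono g); auto; lra).
  assert (0 <= (dg (x + h) - dg x) / h) by (apply Rdiv_le_0_compat; lra).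
  unfold Rabs in Hdel; destruct Rcase_abs in Hdel; lra.
Qed.

Lemma strict_convex_convex g : strictly_convex_pos g -> convex_pos g.
Proof.
  intros H x y t Hx Hy Ht.
  destruct (Req_dec x y) as [->|Hne].
  { replace (t * y + (1 - t) * y) with y by ring. lra. }
  destruct (Req_dec t 0) as [->|H0].
  { replace (0 * x + (1 - 0) * y) with y by ring. lra. }
  destruct (Req_dec t 1) as [->|H1].
  { replace (1 * x + (1 - 1) * y) with x by ring. lra. }
  left. apply H; auto. lra.
Qed.

Lemma lim_at (g : R -> R) D l x0 eps : limit1_in g D l x0 -> 0 < eps ->
  exists a, 0 < a /\ forall u, D u -> Rabs (u - x0) < a -> Rabs (g u - l) < eps.
Proof.
  intros H He. destruct (H eps He) as [a [Ha Hu]]. exists a; split; auto.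
  intros u Du Hd. apply (Hu u). split; auto.
Qed.

Lemma dphi_sign (dphi : R -> R) t0 :
  (forall u v, 0 < u -> u < v -> u * dphi u < v * dphi v) ->
  0 <= t0 -> limit1_in dphi (fun v => 0 < v) 0 t0 ->
  forall v, 0 < v -> (v <= t0 -> dphi v <= 0) /\ (t0 < v -> 0 < dphi v).
Proof.
  intros HA5 Ht0 Hl v Hv. split.
  - intros Hvt. destruct (Rle_or_lt (dphi v) 0) as [|Hp]; auto. exfalso.
    set (P := v * dphi v). assert (HP : 0 < P) by (unfold P; nra).
    destruct (lim_at dphi _ 0 t0 (P / (t0 + 1)) Hl) as [a [Ha Hu]].
    { apply Rdiv_lt_0_compat; lra. }
    set (u := t0 + Rmin a 1 / 2).
    assert (Hm : 0 < Rmin a 1) by (apply Rmin_pos; lra).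
    assert (Hm1 : Rmin a 1 <= a) by apply Rmin_l.
    assert (Hm2 : Rmin a 1 <= 1) by apply Rmin_r.
    assert (Hu' : Rabs (dphi u - 0) < P / (t0 + 1)).
    { apply Hu. unfold u; lra. unfold u. rewrite Rabs_pos_eq; lra. }
    rewrite Rminus_0_r in Hu'.
    assert (Hlt : v * dphi v < u * dphi u) by (apply HA5; unfold u in *; lra).
    assert (u * dphi u <= u * (P / (t0 + 1))).
    { apply Rmult_le_compat_l; [unfold u; lra|]. unfold Rabs in Hu'; destruct Rcase_abs in Hu'; lra. }
    assert (u * (P / (t0 + 1)) < P).
    { apply (Rmult_lt_reg_r (t0 + 1)); [lra|]. unfold Rdiv.
      replace (u * (P * / (t0 + 1)) * (t0 + 1)) with (u * P) by (field; lra).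
      unfold u; nra. }
    fold P in Hlt. lra.
  - intros Htv. set (w := (t0 + v) / 2).
    assert (Hw : 0 <= w * dphi w).
    { destruct (Rle_or_lt 0 (w * dphi w)) as [|Hn]; auto. exfalso.
      set (Q := - (w * dphi w)). assert (HQ : 0 < Q) by (unfold Q; lra).
      destruct (lim_at dphi _ 0 t0 (Q / (t0 + 1)) Hl) as [a [Ha Hu]].
      { apply Rdiv_lt_0_compat; lra. }
      set (u := t0 + Rmin a (Rmin 1 (w - t0)) / 2).
      assert (Hm : 0 < Rmin 1 (w - t0)) by (apply Rmin_pos; unfold w; lra).
      assert (Hm' : 0 < Rmin a (Rmin 1 (w - t0))) by (apply Rmin_pos; lra).
      assert (Hm1 : Rmin a (Rmin 1 (w - t0)) <= a) by apply Rmin_l.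
      assert (Hm2 : Rmin a (Rmin 1 (w - t0)) <= Rmin 1 (w - t0)) by apply Rmin_r.
      assert (Hm3 : Rmin 1 (w - t0) <= 1) by apply Rmin_l.
      assert (Hm4 : Rmin 1 (w - t0) <= w - t0) by apply Rmin_r.
      assert (Hu' : Rabs (dphi u - 0) < Q / (t0 + 1)).
      { apply Hu. unfold u; lra. unfold u. rewrite Rabs_pos_eq; lra. }
      rewrite Rminus_0_r in Hu'.
      assert (Hlt : u * dphi u < w * dphi w) by (apply HA5; unfold u in *; lra).
      assert (- (u * (Q / (t0 + 1))) <= u * dphi u).
      { assert (0 < u) by (unfold u; lra).
        unfold Rabs in Hu'; destruct Rcase_abs in Hu'; nra. }
      assert (u * (Q / (t0 + 1)) < Q).
      { apply (Rmult_lt_reg_r (t0 + 1)); [lra|]. unfold Rdiv.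
        replace (u * (Q * / (t0 + 1)) * (t0 + 1)) with (u * Q) by (field; lra).
        unfold u; nra. }
      unfold Q in *. lra. }
    assert (w * dphi w < v * dphi v) by (apply HA5; unfold w; lra).
    nra.
Qed.

Lemma bracket_up (dphi : R -> R) t0 s tau Q1 F1 F2 :
  (forall u v, 0 < u -> u < v -> u * dphi u < v * dphi v) ->
  (forall v, 0 < v -> (v <= t0 -> dphi v <= 0) /\ (t0 < v -> 0 < dphi v)) ->
  is_lub (fun y => exists v, t0 < v /\ y = dphi v / dphi (s * v)) Q1 ->
  0 < tau -> 1 < s -> 0 < F1 -> 0 < F2 -> F2 < s * F1 -> Q1 * F1 < F2 ->
  F1 * dphi tau - F2 * dphi (s * tau) < 0.
Proof.
  intros HA5 Hs [Hub _] Ht Hs1 HF1 HF2 H1 H2.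
  destruct (Rle_or_lt tau t0) as [Hle|Hgt].
  - assert (HA : tau * dphi tau < (s * tau) * dphi (s * tau)) by (apply HA5; nra).
    assert (HB : dphi tau < s * dphi (s * tau)).
    { apply (Rmult_lt_reg_l tau); auto. nra. }
    destruct (Rle_or_lt (dphi (s * tau)) 0) as [Hn|Hp].
    + assert (F1 * dphi tau < F1 * (s * dphi (s * tau))) by (apply Rmult_lt_compat_l; auto).
      nra.
    + assert (dphi tau <= 0) by (apply (proj1 (Hs tau Ht)); auto). nra.
  - assert (Hp1 : 0 < dphi tau) by (apply (proj2 (Hs tau Ht)); auto).
    assert (Hp2 : 0 < dphi (s * tau)) by (apply (proj2 (Hs (s*tau) ltac:(nra))); nra).
    assert (Hq : dphi tau / dphi (s * tau) <= Q1) by (apply Hub; exists tau; split; auto).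
    assert (dphi tau <= Q1 * dphi (s * tau)).
    { apply (Rmult_le_compat_r (dphi (s * tau))) in Hq; [|lra].
      unfold Rdiv in Hq. rewrite Rmult_assoc, Rinv_l in Hq; lra. }
    nra.
Qed.

Lemma bracket_lo (dphi : R -> R) t0 s tau Q0 F1 F2 :
  (forall u v, 0 < u -> u < v -> u * dphi u < v * dphi v) ->
  (forall v, 0 < v -> (v <= t0 -> dphi v <= 0) /\ (t0 < v -> 0 < dphi v)) ->
  is_glb (fun y => exists v, t0 / s < v /\ y = dphi v / dphi (s * v)) Q0 ->
  0 < tau -> 0 < s -> s < 1 -> 0 < F1 -> 0 < F2 -> s * F1 < F2 -> F2 < Q0 * F1 ->
  0 < F1 * dphi tau - F2 * dphi (s * tau).
Proof.
  intros HA5 Hs [Hlb _] Ht Hs0 Hs1 HF1 HF2 H1 H2.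
  destruct (Rle_or_lt (s * tau) t0) as [Hle|Hgt].
  - assert (HA : (s * tau) * dphi (s * tau) < tau * dphi tau) by (apply HA5; nra).
    assert (HB : s * dphi (s * tau) < dphi tau).
    { apply (Rmult_lt_reg_l tau); auto. nra. }
    assert (dphi (s * tau) <= 0) by (apply (proj1 (Hs (s * tau) ltac:(nra))); auto).
    assert (F1 * (s * dphi (s * tau)) < F1 * dphi tau) by (apply Rmult_lt_compat_l; auto).
    nra.
  - assert (Hp2 : 0 < dphi (s * tau)) by (apply (proj2 (Hs (s*tau) ltac:(nra))); nra).
    assert (Hq : Q0 <= dphi tau / dphi (s * tau)).
    { apply Hlb; exists tau; split; auto.
      apply (Rmult_lt_reg_l s); auto. unfold Rdiv. rewrite <- Rmult_assoc, (Rmult_comm s t0), Rmult_assoc, Rinv_r; lra. }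
    assert (Q0 * dphi (s * tau) <= dphi tau).
    { apply (Rmult_le_compat_r (dphi (s * tau))) in Hq; [|lra].
      unfold Rdiv in Hq. rewrite Rmult_assoc, Rinv_l in Hq; lra. }
    nra.
Qed.


Lemma q1_dec (q1 dq1 : R -> R) :
  (forall s, 1 < s -> derivable_pt_lim q1 s (dq1 s)) ->
  limit1_in (fun s => (q1 s - q1 1) / (s - 1)) (fun s => 1 < s) (dq1 1) 1 ->
  (forall s, 1 <= s -> dq1 s < 0) ->
  forall a b, 1 <= a -> a < b -> q1 b < q1 a.
Proof.
  intros Hd Hl Hneg.
  assert (Hgt : forall a b, 1 < a -> a < b -> q1 b < q1 a).
  { intros a b Ha Hab. destruct (MVT_cor2 q1 dq1 a b Hab) as [c [Hc Hc']].
    intros c Hc; apply Hd; lra. assert (dq1 c < 0) by (apply Hneg; lra). nra. }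
  intros a b Ha Hab. destruct (Req_dec a 1) as [->|Hne]; [|apply Hgt; lra].
  assert (Hn1 := Hneg 1 ltac:(lra)).
  destruct (lim_at _ _ _ _ (- dq1 1 / 2) Hl) as [al [Hal Hu]]; [lra|].
  set (s := 1 + Rmin al (b - 1) / 2).
  assert (Hm : 0 < Rmin al (b - 1)) by (apply Rmin_pos; lra).
  assert (Hm1 : Rmin al (b - 1) <= al) by apply Rmin_l.
  assert (Hm2 : Rmin al (b - 1) <= b - 1) by apply Rmin_r.
  specialize (Hu s ltac:(unfold s; lra) ltac:(unfold s; rewrite Rabs_pos_eq; lra)).
  assert (Hq : (q1 s - q1 1) / (s - 1) < 0) by (unfold Rabs in Hu; destruct Rcase_abs in Hu; lra).
  assert (q1 s - q1 1 < 0).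
  { assert (0 < s - 1) by (unfold s; lra).
    replace (q1 s - q1 1) with ((q1 s - q1 1) / (s - 1) * (s - 1)) by (field; lra). nra. }
  assert (q1 b < q1 s) by (apply Hgt; unfold s; lra). lra.
Qed.

Lemma q0_dec (q0 dq0 : R -> R) :
  (forall s, 0 < s < 1 -> derivable_pt_lim q0 s (dq0 s)) ->
  limit1_in (fun s => (q0 s - q0 1) / (s - 1)) (fun s => 0 < s < 1) (dq0 1) 1 ->
  (forall s, 0 < s <= 1 -> dq0 s < 0) ->
  forall a b, 0 < a -> a < b -> b <= 1 -> q0 b < q0 a.
Proof.
  intros Hd Hl Hneg.
  assert (Hgt : forall a b, 0 < a -> a < b -> b < 1 -> q0 b < q0 a).
  { intros a b Ha Hab Hb. destruct (MVT_cor2 q0 dq0 a b Hab) as [c [Hc Hc']].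
    intros c Hc; apply Hd; lra. assert (dq0 c < 0) by (apply Hneg; lra). nra. }
  intros a b Ha Hab Hb. destruct (Req_dec b 1) as [->|Hne]; [|apply Hgt; lra].
  assert (Hn1 := Hneg 1 ltac:(lra)).
  destruct (lim_at _ _ _ _ (- dq0 1 / 2) Hl) as [al [Hal Hu]]; [lra|].
  set (s := 1 - Rmin al (1 - a) / 2).
  assert (Hm : 0 < Rmin al (1 - a)) by (apply Rmin_pos; lra).
  assert (Hm1 : Rmin al (1 - a) <= al) by apply Rmin_l.
  assert (Hm2 : Rmin al (1 - a) <= 1 - a) by apply Rmin_r.
  specialize (Hu s ltac:(unfold s; lra) ltac:(unfold s; rewrite Rabs_left; lra)).
  assert (Hq : (q0 s - q0 1) / (s - 1) < 0) by (unfold Rabs in Hu; destruct Rcase_abs in Hu; lra).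
  assert (0 < q0 s - q0 1).
  { assert (s - 1 < 0) by (unfold s; lra).
    replace (q0 s - q0 1) with ((q0 s - q0 1) / (s - 1) * (s - 1)) by (field; lra). nra. }
  assert (q0 s < q0 a) by (apply Hgt; unfold s in *; lra). lra.
Qed.

Lemma cont_in_from_zero (g dg : R -> R) :
  limit1_in g (fun y => 0 <= y) (g 0) 0 -> (forall x, 0 < x -> derivable_pt_lim g x (dg x)) ->
  forall b, cont_in g 0 b.
Proof.
  intros H0 Hd b x Hx eps He. destruct (Req_dec x 0) as [->|Hne].
  - destruct (H0 eps He) as [d [Hd' Hy]]. exists d; split; auto.
    intros y Hy' Hyd. apply (Hy y). split; [lra|]. simpl; unfold R_dist; auto.
  - apply cpt_cont_in_pt; auto. apply derivable_continuous_pt. exists (dg x). apply Hd. lra.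
Qed.

Lemma max_exists g a b : a <= b -> cont_in g a b ->
  exists t, a <= t <= b /\ forall y, a <= y <= b -> g y <= g t.
Proof.
  intros Hab Hc. destruct (continuity_ab_maj (fun y => g (clamp a b y)) a b Hab) as [t [Ht Hb]].
  - intros c Hc'. apply cont_in_clamp; auto.
  - exists t. split; auto. intros y Hy. specialize (Ht y Hy). simpl in Ht.
    rewrite !clamp_in in Ht by auto. auto.
Qed.

Lemma min_exists g a b : a <= b -> cont_in g a b ->
  exists t, a <= t <= b /\ forall y, a <= y <= b -> g t <= g y.
Proof.
  intros Hab Hc. destruct (continuity_ab_min (fun y => g (clamp a b y)) a b Hab) as [t [Ht Hb]].
  - intros c Hc'. apply cont_in_clamp; auto.
  - exists t. split; auto. intros y Hy. specialize (Ht y Hy). simpl in Ht.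
    rewrite !clamp_in in Ht by auto. auto.
Qed.

Lemma cont_in_sub g a b a' b' : cont_in g a b -> a <= a' -> b' <= b -> cont_in g a' b'.
Proof.
  intros H Ha Hb x Hx eps He. destruct (H x ltac:(lra) eps He) as [d [Hd Hy]].
  exists d; split; auto. intros y Hy'. apply Hy. lra.
Qed.

Lemma cont_in_plus g h a b : cont_in g a b -> cont_in h a b -> cont_in (fun x => g x + h x) a b.
Proof.
  intros Hg Hh x Hx eps He.
  destruct (Hg x Hx (eps/2) ltac:(lra)) as [d1 [Hd1 H1]].
  destruct (Hh x Hx (eps/2) ltac:(lra)) as [d2 [Hd2 H2]].
  exists (Rmin d1 d2). split; [apply Rmin_pos; auto|].
  intros y Hy Hyd.
  assert (Rabs (y - x) < d1) by (eapply Rlt_le_trans; [exact Hyd|apply Rmin_l]).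
  assert (Rabs (y - x) < d2) by (eapply Rlt_le_trans; [exact Hyd|apply Rmin_r]).
  specialize (H1 y Hy H). specialize (H2 y Hy H0).
  unfold Rabs in *; repeat destruct Rcase_abs; lra.
Qed.

Lemma cont_in_scal g c a b : cont_in g a b -> cont_in (fun x => c * g x) a b.
Proof.
  intros Hg x Hx eps He.
  destruct (Hg x Hx (eps / (Rabs c + 1))) as [d [Hd H1]].
  { apply Rdiv_lt_0_compat; auto. generalize (Rabs_pos c); lra. }
  exists d. split; auto. intros y Hy Hyd. specialize (H1 y Hy Hyd).
  replace (c * g y - c * g x) with (c * (g y - g x)) by ring. rewrite Rabs_mult.
  assert (Hc := Rabs_pos c).
  apply Rle_lt_trans with (Rabs c * (eps / (Rabs c + 1))).
  apply Rmult_le_compat_l; lra.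
  apply (Rmult_lt_reg_r (Rabs c + 1)); [lra|]. unfold Rdiv.
  replace (Rabs c * (eps * / (Rabs c + 1)) * (Rabs c + 1)) with (Rabs c * eps) by (field; lra). nra.
Qed.

Lemma cont_in_opp g a b : cont_in g a b -> cont_in (fun x => - g x) a b.
Proof.
  intros Hg x Hx eps He. destruct (Hg x Hx eps He) as [d [Hd H1]]. exists d; split; auto.
  intros y Hy Hyd. replace (- g y - - g x) with (- (g y - g x)) by ring. rewrite Rabs_Ropp. auto.
Qed.

Lemma endgame_up (tau dtau : R -> R) y K : 0 < y -> 0 < K ->
  (forall x, 0 < x <= y -> derivable_pt_lim tau x (dtau x)) ->
  (forall x, 0 < x <= y -> K / x <= dtau x) ->
  (forall x, 0 < x <= y -> 0 < tau x) -> False.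
Proof.
  intros Hy HK Hd Hdt Hp.
  set (t := y * exp (- ((tau y + 1) / K))).
  assert (He : exp (- ((tau y + 1) / K)) < 1).
  { apply Rlt_le_trans with (exp 0); [|rewrite exp_0; lra]. apply exp_increasing.
    assert (0 < tau y) by (apply Hp; lra).
    assert (0 < (tau y + 1) / K) by (apply Rdiv_lt_0_compat; lra). lra. }
  assert (He0 := exp_pos (- ((tau y + 1) / K))).
  assert (Ht : 0 < t < y) by (unfold t; split; nra).
  destruct (MVT_cor2 (fun x => tau x - K * ln x) (fun x => dtau x - K * / x) t y) as [c [Hc Hc']]; [lra| |].
  - intros c Hc. apply derivable_pt_lim_minus. apply Hd; lra.
    apply derivable_pt_lim_scal. apply derivable_pt_lim_ln; lra.
  - assert (K / c <= dtau c) by (apply Hdt; lra).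
    assert (0 <= dtau c - K * / c) by (unfold Rdiv in *; lra).
    assert (Hl : ln t = ln y - (tau y + 1) / K).
    { unfold t. rewrite ln_mult by auto. rewrite ln_exp. ring. }
    assert (tau t - K * ln t <= tau y - K * ln y) by nra.
    rewrite Hl in H1.
    assert (K * ((tau y + 1) / K) = tau y + 1) by (field; lra).
    assert (0 < tau t) by (apply Hp; lra). nra.
Qed.

Lemma endgame_lo (tau dtau : R -> R) y K C : 0 < y -> 0 < K ->
  (forall x, 0 < x <= y -> derivable_pt_lim tau x (dtau x)) ->
  (forall x, 0 < x <= y -> dtau x <= - (K / x)) ->
  (forall x, 0 < x <= y -> tau x <= C) -> False.
Proof.
  intros Hy HK Hd Hdt Hp.
  assert (Cy : tau y <= C) by (apply Hp; lra).
  set (t := y * exp (- ((C - tau y + 1) / K))).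
  assert (He : exp (- ((C - tau y + 1) / K)) < 1).
  { apply Rlt_le_trans with (exp 0); [|rewrite exp_0; lra]. apply exp_increasing.
    assert (0 < (C - tau y + 1) / K) by (apply Rdiv_lt_0_compat; lra). lra. }
  assert (He0 := exp_pos (- ((C - tau y + 1) / K))).
  assert (Ht : 0 < t < y) by (unfold t; split; nra).
  destruct (MVT_cor2 (fun x => tau x + K * ln x) (fun x => dtau x + K * / x) t y) as [c [Hc Hc']]; [lra| |].
  - intros c Hc. apply derivable_pt_lim_plus. apply Hd; lra.
    apply derivable_pt_lim_scal. apply derivable_pt_lim_ln; lra.
  - assert (dtau c <= - (K / c)) by (apply Hdt; lra).
    assert (dtau c + K * / c <= 0) by (unfold Rdiv in *; lra).
    assert (Hl : ln t = ln y - (C - tau y + 1) / K).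
    { unfold t. rewrite ln_mult by auto. rewrite ln_exp. ring. }
    assert (tau y + K * ln y <= tau t + K * ln t) by nra.
    rewrite Hl in H1.
    assert (K * ((C - tau y + 1) / K) = C - tau y + 1) by (field; lra).
    assert (tau t <= C) by (apply Hp; lra). nra.
Qed.

Lemma lin_lower (r dr : R -> R) y c : 0 < y ->
  limit1_in r (fun x => 0 < x) 0 0 ->
  (forall x, 0 < x <= y -> derivable_pt_lim r x (dr x)) ->
  (forall x, 0 < x <= y -> c <= dr x) ->
  forall rho, 0 < rho <= y -> c * rho <= r rho.
Proof.
  intros Hy Hl Hd Hc rho Hrho.
  destruct (Rle_or_lt (c * rho) (r rho)) as [|Hlt]; auto. exfalso.
  set (D := c * rho - r rho).
  destruct (lim_at r _ 0 0 (D / 2) Hl) as [a [Ha Hu]]; [unfold D; lra|].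
  set (x := Rmin (Rmin a rho) (D / (2 * (Rabs c + 1))) / 2).
  assert (Hc0 := Rabs_pos c).
  assert (HD2 : 0 < D / (2 * (Rabs c + 1))) by (apply Rdiv_lt_0_compat; unfold D; lra).
  assert (Hm0 : 0 < Rmin a rho) by (apply Rmin_pos; lra).
  assert (Hm : 0 < Rmin (Rmin a rho) (D / (2 * (Rabs c + 1)))) by (apply Rmin_pos; lra).
  assert (H1 : Rmin (Rmin a rho) (D / (2 * (Rabs c + 1))) <= Rmin a rho) by apply Rmin_l.
  assert (H2 : Rmin (Rmin a rho) (D / (2 * (Rabs c + 1))) <= D / (2 * (Rabs c + 1))) by apply Rmin_r.
  assert (H3 : Rmin a rho <= a) by apply Rmin_l.
  assert (H4 : Rmin a rho <= rho) by apply Rmin_r.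
  assert (Hx : 0 < x < rho) by (unfold x; lra).
  specialize (Hu x ltac:(lra) ltac:(rewrite Rminus_0_r, Rabs_pos_eq; unfold x; lra)).
  rewrite Rminus_0_r in Hu.
  destruct (MVT_cor2 r dr x rho) as [cc [Hcc Hcc']]; [lra| intros; apply Hd; lra|].
  assert (c <= dr cc) by (apply Hc; lra).
  assert (Hxc : Rabs c * x <= D / 2).
  { assert (x <= D / (2 * (Rabs c + 1))) by (unfold x; lra).
    assert (Rabs c * x <= (Rabs c + 1) * x) by nra.
    assert ((Rabs c + 1) * (D / (2 * (Rabs c + 1))) = D / 2) by (field; lra). nra. }
  assert (c * x <= Rabs c * x) by (apply Rmult_le_compat_r; [lra| apply Rle_abs]).
  assert (- (D / 2) < r x) by (unfold Rabs in Hu; destruct Rcase_abs in Hu; lra).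
  assert (c * (rho - x) <= dr cc * (rho - x)) by (apply Rmult_le_compat_r; lra).
  unfold D in *. nra.
Qed.

Lemma lin_upper (r dr : R -> R) y c : 0 < y ->
  limit1_in r (fun x => 0 < x) 0 0 ->
  (forall x, 0 < x <= y -> derivable_pt_lim r x (dr x)) ->
  (forall x, 0 < x <= y -> dr x <= c) ->
  forall rho, 0 < rho <= y -> r rho <= c * rho.
Proof.
  intros Hy Hl Hd Hc rho Hrho.
  assert (Hl' : limit1_in (fun x => - r x) (fun x => 0 < x) 0 0).
  { intros eps He. destruct (Hl eps He) as [a [Ha Hu]]. exists a; split; auto.
    intros x Hx. specialize (Hu x Hx). simpl in *. unfold R_dist in *.
    replace (- r x - 0) with (- (r x - 0)) by ring. rewrite Rabs_Ropp; auto. }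
  assert (H := lin_lower (fun x => - r x) (fun x => - dr x) y (- c) Hy Hl').
  cut ((- c) * rho <= - r rho); [lra|]. apply H; auto.
  intros x Hx. apply derivable_pt_lim_opp. apply Hd; auto.
  intros x Hx. specialize (Hc x Hx). lra.
Qed.

Lemma b0_spec df x : 0 <= x -> cont_in df 0 x -> is_min_on df 0 x (b0 df x).
Proof.
  intros Hx Hc. unfold b0. apply epsilon_spec.
  destruct (min_exists df 0 x Hx Hc) as [t [Ht Hm]]. exists (df t). split; eauto.
Qed.

Lemma b1_spec df x : 0 <= x -> cont_in df 0 x -> is_max_on df 0 x (b1 df x).
Proof.
  intros Hx Hc. unfold b1. apply epsilon_spec.
  destruct (max_exists df 0 x Hx Hc) as [t [Ht Hm]]. exists (df t). split; eauto.
Qed.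

Lemma lim_dom g D D' l x0 : (forall x, D' x -> D x) -> limit1_in g D l x0 -> limit1_in g D' l x0.
Proof.
  intros HD H eps He. destruct (H eps He) as [a [Ha Hu]]. exists a; split; auto.
  intros x [Hx Hd]. apply Hu. split; auto.
Qed.

Lemma cpt_lim g x0 : continuity_pt g x0 -> limit1_in g (fun _ => True) (g x0) x0.
Proof.
  intros H eps He. destruct (cpt_near g x0 eps H He) as [d [Hd Hz]]. exists d; split; auto.
  intros x [_ Hx]. apply Hz. exact Hx.
Qed.

Lemma lim_const c D x0 : limit1_in (fun _ => c) D c x0.
Proof.
  intros eps He. exists 1; split; [lra|]. intros x _. simpl. unfold R_dist.
  rewrite Rminus_diag, Rabs_R0; auto.
Qed.

Lemma pick_left (H : R -> R) x0 : 0 < x0 ->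
  limit1_in H (fun x => 0 < x <= 1) (H x0) x0 -> x0 <= 1 -> 0 < H x0 ->
  exists y, 0 < y < x0 /\ 0 < H y.
Proof.
  intros Hx0 Hl Hx1 Hp. destruct (Hl (H x0) Hp) as [a [Ha Hu]].
  set (y := x0 - Rmin a x0 / 2).
  assert (Hm : 0 < Rmin a x0) by (apply Rmin_pos; lra).
  assert (H1 : Rmin a x0 <= a) by apply Rmin_l.
  assert (H2 : Rmin a x0 <= x0) by apply Rmin_r.
  exists y. split; [unfold y; lra|].
  specialize (Hu y). simpl in Hu. unfold R_dist in Hu.
  assert (Rabs (H y - H x0) < H x0).
  { apply Hu. split; [unfold y; lra|]. unfold y. rewrite Rabs_left; lra. }
  unfold Rabs in H0; destruct Rcase_abs in H0; lra.
Qed.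

Module MuMod.
Import Coquelicot.Coquelicot.

Lemma cont_rmax0 g x : continuity_pt g x -> continuity_pt (fun y => Rmax (g y) 0) x.
Proof.
  intros H eps He. destruct (H eps He) as [d [Hd Hy]]. exists d; split; auto.
  intros y Hy'. specialize (Hy y Hy'). simpl in *. unfold R_dist in *.
  unfold Rmax; repeat destruct Rle_dec; unfold Rabs in *; repeat destruct Rcase_abs; lra.
Qed.

Lemma cont_kmax (kappa : R -> R) :
  (forall x, 0 <= x -> limit1_in kappa (fun y => 0 <= y) (kappa x) x) ->
  forall x, continuity_pt (fun y => kappa (Rmax 0 y)) x.
Proof.
  intros Hk x eps He.
  destruct (Hk (Rmax 0 x) (Rmax_l 0 x) eps He) as [d [Hd Hy]]. exists d; split; auto.
  intros y [_ Hy']. simpl in *. unfold R_dist in *. apply Hy. split; [apply Rmax_l|].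
  simpl; unfold R_dist.
  eapply Rle_lt_trans; [|exact Hy'].
  unfold Rmax; repeat destruct Rle_dec; unfold Rabs; repeat destruct Rcase_abs; lra.
Qed.

Definition gk (kappa : R -> R) (s : R) := Rmax 0 s * Rmax (kappa (Rmax 0 s)) 0.
Definition mu (kappa : R -> R) (x : R) := RInt (gk kappa) 0 x.


Lemma gk_cont x (kappa : R -> R) (Hk : forall x, 0 <= x -> limit1_in kappa (fun y => 0 <= y) (kappa x) x) : continuity_pt (gk kappa) x.
Proof.
  unfold gk. apply (continuity_pt_mult (fun s => Rmax 0 s) (fun s => Rmax (kappa (Rmax 0 s)) 0)).
  - intros eps He. exists eps; split; auto. intros y [_ Hy]. simpl in *; unfold R_dist in *.
    eapply Rle_lt_trans; [|exact Hy].
    unfold Rmax; repeat destruct Rle_dec; unfold Rabs; repeat destruct Rcase_abs; lra.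
  - apply cont_rmax0. apply cont_kmax; auto.
Qed.

Lemma gk_nonneg (kappa : R -> R) x : 0 <= gk kappa x.
Proof. unfold gk. apply Rmult_le_pos; apply Rmax_l || apply Rmax_r. Qed.

Lemma mu_deriv x (kappa : R -> R) (Hk : forall x, 0 <= x -> limit1_in kappa (fun y => 0 <= y) (kappa x) x) : derivable_pt_lim (mu kappa) x (gk kappa x).
Proof.
  apply is_derive_Reals. unfold mu.
  apply (is_derive_RInt (gk kappa) (RInt (gk kappa) 0) 0 x).
  - exists (mkposreal 1 Rlt_0_1). intros y _.
    assert (Hex : ex_RInt (gk kappa) 0 y).
    { apply (ex_RInt_continuous (V:=R_CompleteNormedModule)). intros z _. apply continuity_pt_filterlim. apply gk_cont; auto. }
    exact (RInt_correct _ _ _ Hex).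
  - apply continuity_pt_filterlim. apply gk_cont; auto.
Qed.

Lemma mu0 (kappa : R -> R) : mu kappa 0 = 0.
Proof. unfold mu. rewrite RInt_point. reflexivity. Qed.

Lemma mu_mono a b (kappa : R -> R) (Hk : forall x, 0 <= x -> limit1_in kappa (fun y => 0 <= y) (kappa x) x) : a <= b -> mu kappa a <= mu kappa b.
Proof.
  intros Hab. apply (mono_ge _ (gk kappa)); auto.
  - apply (deriv_cont_in _ (gk kappa)). intros; apply mu_deriv; auto.
  - intros; apply mu_deriv; auto.
  - intros; apply gk_nonneg.
Qed.

Lemma mu_riemann (kappa : R -> R) M (pr : Riemann_integrable (fun s => s * Rmax (kappa s) 0) 0 M) :
  0 <= M -> mu kappa M = RiemannInt pr.
Proof.
  intros HM. rewrite <- RInt_Reals. unfold mu. apply RInt_ext.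
  intros x Hx. rewrite Rmin_left in Hx by auto. rewrite Rmax_right in Hx by auto.
  unfold gk. rewrite Rmax_right by lra. reflexivity.
Qed.

End MuMod.
Import MuMod.

Lemma dlin m x : derivable_pt_lim (fun y => m * y) x m.
Proof.
  assert (H := derivable_pt_lim_scal (fun y => y) m x 1 (derivable_pt_lim_id x)).
  unfold mult_real_fct in H. rewrite Rmult_1_r in H. exact H.
Qed.

Lemma df_pos (kappa f df : R -> R)
  (Hk : forall x, 0 <= x -> limit1_in kappa (fun y => 0 <= y) (kappa x) x)
  (Hf0 : f 0 = 0) (Hdf0 : df 0 = 1)
  (Hfc0 : limit1_in f (fun y => 0 <= y) (f 0) 0)
  (Hdfc0 : limit1_in df (fun y => 0 <= y) (df 0) 0)
  (Hf' : forall x, 0 < x -> derivable_pt_lim f x (df x))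
  (Hf'' : forall x, 0 < x -> derivable_pt_lim df x (- kappa x * f x))
  M (HM : 0 <= M) (Hmu1 : mu kappa M <= 1) :
  forall z, 0 <= z <= M -> 0 < df z.
Proof.
  intros z Hz. destruct (Rlt_or_le 0 (df z)) as [|Hneg]; auto. exfalso.
  assert (Hcf := cont_in_from_zero f df Hfc0 Hf').
  assert (Hcdf := cont_in_from_zero df _ Hdfc0 Hf'').
  set (E := fun x => 0 <= x <= M /\ forall y, 0 <= y <= x -> 0 < df y).
  assert (HE0 : E 0). { split; [lra|]. intros y Hy. replace y with 0 by lra. lra. }
  assert (Hb : bound E). { exists M. intros x [Hx _]; lra. }
  destruct (completeness E Hb (ex_intro _ 0 HE0)) as [x1 [Hub Hlub]].
  assert (Hx10 : 0 <= x1) by (apply Hub; auto).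
  assert (Hbelow : forall y, 0 <= y < x1 -> 0 < df y).
  { intros y Hy. destruct (Rlt_or_le 0 (df y)) as [|Hy']; auto. exfalso.
    assert (x1 <= y); [|lra]. apply Hlub. intros x [Hx Hx'].
    destruct (Rle_or_lt x y) as [|Hxy]; auto. specialize (Hx' y ltac:(lra)). lra. }
  assert (Hx1z : x1 <= z).
  { apply Hlub. intros x [Hx Hx']. destruct (Rle_or_lt x z) as [|Hxz]; auto.
    specialize (Hx' z ltac:(lra)). lra. }
  assert (Hx1 : df x1 <= 0).
  { destruct (Rle_or_lt (df x1) 0) as [|Hp]; auto. exfalso.
    assert (Hlt : x1 < z) by (destruct (Req_dec x1 z); subst; lra).
    destruct (Hcdf M x1 ltac:(lra) (df x1) Hp) as [d [Hd Hy]].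
    set (x' := x1 + Rmin d (M - x1) / 2).
    assert (Hm : 0 < Rmin d (M - x1)) by (apply Rmin_pos; lra).
    assert (Hm1 : Rmin d (M - x1) <= d) by apply Rmin_l.
    assert (Hm2 : Rmin d (M - x1) <= M - x1) by apply Rmin_r.
    assert (E x').
    { split; [unfold x'; lra|]. intros y Hy'. destruct (Rlt_or_le y x1).
      - apply Hbelow; lra.
      - assert (Rabs (y - x1) < d) by (rewrite Rabs_pos_eq; unfold x' in *; lra).
        specialize (Hy y ltac:(unfold x' in *; lra) H0).
        unfold Rabs in Hy; destruct Rcase_abs in Hy; lra. }
    specialize (Hub x' H). unfold x' in Hub; lra. }
  assert (Hx1p : 0 < x1) by (destruct (Req_dec x1 0) as [E0|]; [rewrite E0 in Hx1; lra|lra]).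
  assert (Hfnn : forall x, 0 <= x <= x1 -> 0 <= f x).
  { intros x Hx. rewrite <- Hf0. apply (mono_ge f df 0 x); try lra.
    apply cont_in_sub with 0 x; [apply Hcf|lra|lra].
    intros y Hy; apply Hf'; lra. intros y Hy. left; apply Hbelow; lra. }
  destruct (max_exists df 0 x1 Hx10 (Hcdf x1)) as [t [Ht Htmax]].
  set (m := df t).
  assert (Hm1 : 1 <= m) by (unfold m; rewrite <- Hdf0; apply Htmax; lra).
  assert (Htx1 : t < x1) by (destruct (Req_dec t x1) as [E0|]; [unfold m in Hm1; rewrite E0 in Hm1; lra|lra]).
  assert (Hfm : forall x, 0 <= x <= x1 -> f x <= m * x).
  { intros x Hx. cut (m * 0 - f 0 <= m * x - f x). { rewrite Hf0; lra. }
    apply (mono_ge (fun y => m * y - f y) (fun y => m - df y) 0 x); try lra.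
    - apply cont_in_plus. apply (deriv_cont_in _ (fun _ => m)). intros; apply dlin.
      apply cont_in_opp. apply cont_in_sub with 0 x; [apply Hcf|lra|lra].
    - intros y Hy. apply derivable_pt_lim_minus. apply dlin. apply Hf'; lra.
    - intros y Hy. assert (df y <= m) by (apply Htmax; lra). lra. }
  set (w := fun x => df x + m * mu kappa x).
  set (dw := fun x => - kappa x * f x + m * gk kappa x).
  assert (Hdw : forall x, 0 < x -> derivable_pt_lim w x (dw x)).
  { intros x Hx. apply derivable_pt_lim_plus. apply Hf''; auto.
    apply derivable_pt_lim_scal. apply mu_deriv; auto. }
  assert (Hcw : forall a b, 0 <= a -> b <= M -> cont_in w a b).
  { intros a b Ha Hb0. apply cont_in_plus. apply cont_in_sub with 0 M; auto.
    apply cont_in_scal. apply (deriv_cont_in _ (gk kappa)). intros; apply mu_deriv; auto. }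
  assert (Hgk : forall x, 0 < x -> gk kappa x = x * Rmax (kappa x) 0).
  { intros x Hx. unfold gk. rewrite Rmax_right by lra. reflexivity. }
  assert (Hdwp : forall x, t < x < x1 -> 0 <= dw x).
  { intros x Hx. unfold dw. rewrite Hgk by lra.
    assert (0 <= f x) by (apply Hfnn; lra). assert (f x <= m * x) by (apply Hfm; lra).
    unfold Rmax. destruct Rle_dec; nra. }
  assert (Hmu0 : 0 <= mu kappa t) by (rewrite <- (mu0 kappa); apply mu_mono; auto; lra).
  assert (Hmux1 : mu kappa x1 <= 1) by (apply Rle_trans with (mu kappa M); [apply mu_mono; auto; lra| auto]).
  destruct (classic (exists x, t < x < x1 /\ 0 < kappa x)) as [[x [Hx Hkx]]|Hno].
  - assert (Hfx : f x < m * x).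
    { destruct (Rlt_or_le (f x) (m * x)) as [|Hge]; auto. exfalso.
      assert (Heqf : f x = m * x) by (assert (f x <= m * x) by (apply Hfm; lra); lra).
      set (g := fun u => m * u - f u).
      assert (Hgd : derivable_pt_lim g x (m - df x)).
      { apply derivable_pt_lim_minus. apply dlin. apply Hf'; lra. }
      assert (pr : derivable_pt g x) by (exists (m - df x); auto).
      assert (H1 := deriv_minimum g 0 x1 x pr ltac:(lra) ltac:(lra)).
      rewrite (derive_pt_eq_0 _ _ _ pr Hgd) in H1.
      assert (Hdfx : df x = m).
      { cut (m - df x = 0); [lra|]. apply H1. intros u Hu1 Hu2.
        unfold g. assert (f u <= m * u) by (apply Hfm; lra). lra. }
      assert (pr2 : derivable_pt df x) by (exists (- kappa x * f x); apply Hf''; lra).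
      assert (H2 := deriv_maximum df 0 x1 x pr2 ltac:(lra) ltac:(lra)).
      rewrite (derive_pt_eq_0 _ _ _ pr2 (Hf'' x ltac:(lra))) in H2.
      assert (- kappa x * f x = 0).
      { apply H2. intros u Hu1 Hu2. rewrite Hdfx. apply Htmax; lra. }
      assert (0 < f x) by nra. nra. }
    assert (Hdwx : 0 < dw x).
    { unfold dw. rewrite Hgk by lra. rewrite Rmax_left by lra. nra. }
    destruct (Hdw x ltac:(lra) (dw x) Hdwx) as [del Hdel].
    assert (Hdp := cond_pos del).
    set (h := Rmin del (x1 - x) / 2).
    assert (Hm' : 0 < Rmin del (x1 - x)) by (apply Rmin_pos; lra).
    assert (Hma : Rmin del (x1 - x) <= del) by apply Rmin_l.
    assert (Hmb : Rmin del (x1 - x) <= x1 - x) by apply Rmin_r.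
    assert (Hh : 0 < h) by (unfold h; lra).
    specialize (Hdel h ltac:(lra) ltac:(rewrite Rabs_pos_eq; unfold h; lra)).
    assert (Hq : 0 < (w (x + h) - w x) / h) by (unfold Rabs in Hdel; destruct Rcase_abs in Hdel; lra).
    assert (Hwx : w x < w (x + h)).
    { assert (0 < w (x + h) - w x); [|lra].
      replace (w (x + h) - w x) with ((w (x + h) - w x) / h * h) by (field; lra).
      apply Rmult_lt_0_compat; auto. }
    assert (Hw1 : w t <= w x).
    { apply (mono_ge w dw); try lra. apply Hcw; lra. intros; apply Hdw; lra.
      intros; apply Hdwp; lra. }
    assert (Hw2 : w (x + h) <= w x1).
    { apply (mono_ge w dw); try (unfold h; lra). apply Hcw; lra. intros; apply Hdw; lra.
      intros; apply Hdwp; unfold h in *; lra. }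
    unfold w, m in *. nra.
  - assert (Hmueq : mu kappa x1 <= mu kappa t).
    { apply (mono_le (mu kappa) (gk kappa)); try lra.
      apply (deriv_cont_in _ (gk kappa)). intros; apply mu_deriv; auto.
      intros; apply mu_deriv; auto.
      intros y Hy. rewrite Hgk by lra. destruct (Rle_or_lt (kappa y) 0).
      rewrite Rmax_right by lra. lra. exfalso; apply Hno; exists y; split; auto. }
    assert (Hw1 : w t <= w x1).
    { apply (mono_ge w dw); try lra. apply Hcw; lra. intros; apply Hdw; lra.
      intros; apply Hdwp; lra. }
    unfold w, m in *. nra.
Qed.

Theorem theorem4p2
  (n : nat) (Hn : (2 <= n)%nat)
  (* kappa continuous on [0,oo) *)
  (kappa : R -> R)
  (Hkappa : forall x, 0 <= x -> limit1_in kappa (fun y => 0 <= y) (kappa x) x)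
  (* f solves f'' + kappa f = 0, f(0) = 0, f'(0) = 1 on [0,oo); df = f' *)
  (f df : R -> R)
  (Hf0 : f 0 = 0) (Hdf0 : df 0 = 1)
  (Hfc0 : limit1_in f (fun y => 0 <= y) (f 0) 0)
  (Hdfc0 : limit1_in df (fun y => 0 <= y) (df 0) 0)
  (Hf' : forall x, 0 < x -> derivable_pt_lim f x (df x))
  (Hf'' : forall x, 0 < x -> derivable_pt_lim df x (- kappa x * f x))
  (* lambda > 0 and mu_+(max(lambda,1)) <= 1 *)
  (lam : R) (Hlam : 0 < lam)
  (Hmu : exists pr : Riemann_integrable (fun s => s * Rmax (kappa s) 0) 0 (Rmax lam 1),
           RiemannInt pr <= 1)
  (* (A1) h is C^2 and strictly convex on (0,oo) *)
  (h dh d2h : R -> R)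
  (Hh1 : forall x, 0 < x -> derivable_pt_lim h x (dh x))
  (Hh2 : forall x, 0 < x -> derivable_pt_lim dh x (d2h x))
  (Hh2c : forall x, 0 < x -> continuity_pt d2h x)
  (Hhconv : strictly_convex_pos h)
  (* (A4) phi : (0,oo) -> (0,oo) is C^2 and convex *)
  (phi dphi d2phi : R -> R)
  (Hphipos : forall x, 0 < x -> 0 < phi x)
  (Hphi1 : forall x, 0 < x -> derivable_pt_lim phi x (dphi x))
  (Hphi2 : forall x, 0 < x -> derivable_pt_lim dphi x (d2phi x))
  (Hphi2c : forall x, 0 < x -> continuity_pt d2phi x)
  (Hphiconv : convex_pos phi)
  (* (A5) v |-> v phi'(v) is increasing *)
  (HA5 : forall u v, 0 < u -> u < v -> u * dphi u < v * dphi v)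
  (* (A6) *)
  (t0 : R) (Ht0 : 0 <= t0)
  (Ht0phi : limit1_in dphi (fun v => 0 < v) 0 t0)
  (q1 dq1 q0 dq0 q1inv q0inv : R -> R)
  (Hq1 : forall s, 1 <= s ->
     is_lub (fun y => exists v, t0 < v /\ y = dphi v / dphi (s * v)) (q1 s))
  (Hq0 : forall s, 0 < s -> s <= 1 ->
     is_glb (fun y => exists v, t0 / s < v /\ y = dphi v / dphi (s * v)) (q0 s))
  (* q1 in C^1[1,oo) with q1' < 0 *)
  (Hq1d : forall s, 1 < s -> derivable_pt_lim q1 s (dq1 s))
  (Hq1d1 : limit1_in (fun s => (q1 s - q1 1) / (s - 1)) (fun s => 1 < s) (dq1 1) 1)
  (Hdq1c : forall s, 1 <= s -> limit1_in dq1 (fun y => 1 <= y) (dq1 s) s)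
  (Hdq1neg : forall s, 1 <= s -> dq1 s < 0)
  (Hq1lim : forall eps, 0 < eps -> exists M, forall s, M < s -> 1 <= s -> Rabs (q1 s) < eps)
  (* q0 in C^1(0,1] with q0' < 0 *)
  (Hq0d : forall s, 0 < s < 1 -> derivable_pt_lim q0 s (dq0 s))
  (Hq0d1 : limit1_in (fun s => (q0 s - q0 1) / (s - 1)) (fun s => 0 < s < 1) (dq0 1) 1)
  (Hdq0c : forall s, 0 < s <= 1 -> limit1_in dq0 (fun y => 0 < y <= 1) (dq0 s) s)
  (Hdq0neg : forall s, 0 < s <= 1 -> dq0 s < 0)
  (Hq0lim : forall M, exists delta, 0 < delta /\
                forall s, 0 < s -> s < delta -> s <= 1 -> M < q0 s)
  (* inverses q1^{-1} : (0,1] -> [1,oo), q0^{-1} : [1,oo) -> (0,1] *)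
  (Hq1inv : forall y, 0 < y <= 1 -> 1 <= q1inv y /\ q1 (q1inv y) = y)
  (Hq0inv : forall y, 1 <= y -> (0 < q0inv y <= 1) /\ q0 (q0inv y) = y)
  (* r : a regular equilibrium solution with r(1) = lambda *)
  (r dr d2r : R -> R)
  (Hr1 : forall rho, 0 < rho < 1 -> derivable_pt_lim r rho (dr rho))
  (Hr1at1 : limit1_in (fun x => (r x - r 1) / (x - 1)) (fun x => 0 < x < 1) (dr 1) 1)
  (Hdrc : forall rho, 0 < rho <= 1 -> limit1_in dr (fun x => 0 < x <= 1) (dr rho) rho)
  (Hr2 : forall rho, 0 < rho < 1 -> derivable_pt_lim dr rho (d2r rho))
  (Hdrpos : forall rho, 0 < rho <= 1 -> 0 < dr rho)
  (Hreg : limit1_in r (fun x => 0 < x) 0 0)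
  (Hrlam : r 1 = lam)
  (Heq : forall rho, 0 < rho < 1 ->
     let tau := f (r rho) / f rho in
     f rho * (d2phi (dr rho) + d2h (dr rho * tau ^ (n - 1)) * tau ^ (2 * (n - 1)))
       * d2r rho
     = INR (n - 1) * (df (r rho) * dphi tau - df rho * dphi (dr rho))
       - INR (n - 1) * (df (r rho) * dr rho - df rho * tau)
           * d2h (dr rho * tau ^ (n - 1)) * dr rho * tau ^ (2 * n - 3)) :
  forall rho, 0 < rho <= 1 ->
    alpha0 df q0inv rho (r rho) * (f (r rho) / f rho) <= dr rho /\
    dr rho <= alpha1 df q1inv rho (r rho) * (f (r rho) / f rho).
Proof.
  intros rho0 Hrho0.
  set (M := Rmax lam 1).
  assert (HM1 : 1 <= M) by apply Rmax_r.
  assert (HlamM : lam <= M) by apply Rmax_l.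
  assert (Hmu1 : mu kappa M <= 1).
  { destruct Hmu as [pr Hpr]. rewrite (mu_riemann kappa M pr). exact Hpr. lra. }
  assert (Hdfp := df_pos kappa f df Hkappa Hf0 Hdf0 Hfc0 Hdfc0 Hf' Hf'' M ltac:(lra) Hmu1).
  assert (Hcf := cont_in_from_zero f df Hfc0 Hf').
  assert (Hcdf := cont_in_from_zero df _ Hdfc0 Hf'').
  assert (Hfp : forall z, 0 < z <= M -> 0 < f z).
  { intros z Hz. rewrite <- Hf0. apply (mono_gt f df 0 z); try lra. apply Hcf.
    intros; apply Hf'; lra. intros; apply Hdfp; lra. }
  assert (HB0 : forall x y, 0 <= y <= x -> x <= M ->
             0 < b0 df x /\ b0 df x <= df y /\ b0 df x <= 1).
  { intros x y Hy Hx. destruct (b0_spec df x ltac:(lra) (Hcdf x)) as [[s0 [Hs0 Hs0e]] Hle].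
    split; [rewrite <- Hs0e; apply Hdfp; lra|]. split; [apply Hle; lra|].
    rewrite <- Hdf0. apply Hle; lra. }
  assert (HB1 : forall x y, 0 <= y <= x -> df y <= b1 df x /\ 1 <= b1 df x).
  { intros x y Hy. destruct (b1_spec df x ltac:(lra) (Hcdf x)) as [_ Hle].
    split; [apply Hle; lra|]. rewrite <- Hdf0. apply Hle; lra. }
  assert (Hfub : forall x z, 0 < z <= x -> x <= M -> f z <= b1 df x * z).
  { intros x z Hz Hx. destruct (MVT_in f df 0 z) as [c [Hc Hce]]; try lra.
    apply Hcf. intros; apply Hf'; lra.
    rewrite Hf0 in Hce. assert (df c <= b1 df x) by (apply HB1; lra). nra. }
  assert (Hflb : forall x z, 0 < z <= x -> x <= M -> b0 df x * z <= f z).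
  { intros x z Hz Hx. destruct (MVT_in f df 0 z) as [c [Hc Hce]]; try lra.
    apply Hcf. intros; apply Hf'; lra.
    rewrite Hf0 in Hce. assert (b0 df x <= df c) by (apply HB0; lra). nra. }
  assert (Hcr : forall a, 0 < a -> cont_in r a 1).
  { intros a Ha x Hx eps He. destruct (Req_dec x 1) as [->|Hne].
    - destruct (lim_at _ _ _ _ 1 Hr1at1 Rlt_0_1) as [al [Hal Hu]].
      exists (Rmin al (eps / (Rabs (dr 1) + 1))). split.
      { apply Rmin_pos; auto. apply Rdiv_lt_0_compat; auto. generalize (Rabs_pos (dr 1)); lra. }
      intros y Hy Hyd. destruct (Req_dec y 1) as [->|Hy1].
      { rewrite Rminus_diag, Rabs_R0; lra. }
      assert (H1 : Rabs (y - 1) < al) by (eapply Rlt_le_trans; [exact Hyd|apply Rmin_l]).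
      assert (H2 : Rabs (y - 1) < eps / (Rabs (dr 1) + 1)) by (eapply Rlt_le_trans; [exact Hyd|apply Rmin_r]).
      specialize (Hu y ltac:(lra) H1).
      assert (Hq : Rabs ((r y - r 1) / (y - 1)) < Rabs (dr 1) + 1).
      { assert (Rabs ((r y - r 1) / (y - 1)) <= Rabs ((r y - r 1) / (y - 1) - dr 1) + Rabs (dr 1)).
        { replace ((r y - r 1) / (y - 1)) with (((r y - r 1) / (y - 1) - dr 1) + dr 1) at 1 by ring.
          apply Rabs_triang. }
        lra. }
      replace (r y - r 1) with ((r y - r 1) / (y - 1) * (y - 1)) by (field; lra).
      rewrite Rabs_mult.
      assert (Hp : 0 <= Rabs (y - 1)) by apply Rabs_pos.
      assert (Hp2 : 0 < Rabs (dr 1) + 1) by (generalize (Rabs_pos (dr 1)); lra).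
      apply Rle_lt_trans with ((Rabs (dr 1) + 1) * Rabs (y - 1)).
      { apply Rmult_le_compat_r; lra. }
      apply (Rmult_lt_reg_r (/ (Rabs (dr 1) + 1))). apply Rinv_0_lt_compat; auto.
      replace ((Rabs (dr 1) + 1) * Rabs (y - 1) * / (Rabs (dr 1) + 1)) with (Rabs (y - 1)) by (field; lra).
      exact H2.
    - apply cpt_cont_in_pt; auto. apply derivable_continuous_pt. exists (dr x). apply Hr1; lra. }
  assert (Hrinc : forall x y, 0 < x -> x < y -> y <= 1 -> r x < r y).
  { intros x y Hx Hxy Hy. apply (mono_gt r dr x y); auto.
    apply cont_in_sub with x 1; [apply Hcr; lra|lra|lra].
    intros; apply Hr1; lra. intros; apply Hdrpos; lra. }
  assert (Hrpos : forall x, 0 < x <= 1 -> 0 < r x).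
  { intros x Hx. destruct (Rlt_or_le 0 (r x)) as [|Hle]; auto. exfalso.
    assert (Hx2 : r (x / 2) < r x) by (apply Hrinc; lra).
    destruct (lim_at r _ 0 0 (- r (x / 2)) Hreg) as [al [Hal Hu]]; [lra|].
    set (u := Rmin al (x / 2) / 2).
    assert (Hm : 0 < Rmin al (x / 2)) by (apply Rmin_pos; lra).
    assert (Hm1 : Rmin al (x / 2) <= al) by apply Rmin_l.
    assert (Hm2 : Rmin al (x / 2) <= x / 2) by apply Rmin_r.
    specialize (Hu u ltac:(unfold u; lra) ltac:(rewrite Rminus_0_r, Rabs_pos_eq; unfold u; lra)).
    assert (r u < r (x / 2)) by (apply Hrinc; unfold u; lra).
    rewrite Rminus_0_r in Hu. unfold Rabs in Hu; destruct Rcase_abs in Hu; lra. }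
  assert (Hrle : forall x, 0 < x <= 1 -> r x <= lam).
  { intros x Hx. rewrite <- Hrlam. destruct (Req_dec x 1) as [->|]; [lra|].
    left; apply Hrinc; lra. }
  assert (Hd2phi : forall x, 0 < x -> 0 <= d2phi x).
  { intros x Hx. apply (convex_d2_nonneg phi dphi); auto. }
  assert (Hd2h : forall x, 0 < x -> 0 <= d2h x).
  { intros x Hx. apply (convex_d2_nonneg h dh); auto. apply strict_convex_convex; auto. }
  assert (Hsign := dphi_sign dphi t0 HA5 Ht0 Ht0phi).
  assert (Hq1dec := q1_dec q1 dq1 Hq1d Hq1d1 Hdq1neg).
  assert (Hq0dec := q0_dec q0 dq0 Hq0d Hq0d1 Hdq0neg).
  assert (Hrr : forall x, 0 < x <= 1 -> 0 < r x <= M) by (intros x Hx; split; [apply Hrpos; auto| apply Rle_trans with lam; [apply Hrle; auto| lra]]).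
  set (tau := fun x => f (r x) / f x).
  set (dtau := fun x => (df (r x) * dr x * f x - df x * f (r x)) / (f x)²).
  assert (Htaup : forall x, 0 < x <= 1 -> 0 < tau x).
  { intros x Hx. unfold tau. apply Rdiv_lt_0_compat; apply Hfp; [apply Hrr; auto| lra]. }
  assert (Htaud : forall x, 0 < x < 1 -> derivable_pt_lim tau x (dtau x)).
  { intros x Hx. assert (Hfx : f x <> 0) by (assert (0 < f x) by (apply Hfp; lra); lra).
    assert (H := derivable_pt_lim_div (comp f r) f x _ _
       (derivable_pt_lim_comp r f x _ _ (Hr1 x Hx) (Hf' (r x) ltac:(apply Hrpos; lra))) (Hf' x ltac:(lra)) Hfx).
    unfold div_fct, comp in H. exact H. }
  set (s := fun x => dr x / tau x).
  set (ds := fun x => (d2r x * tau x - dtau x * dr x) / (tau x)²).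
  assert (Hsd : forall x, 0 < x < 1 -> derivable_pt_lim s x (ds x)).
  { intros x Hx. assert (Htx : tau x <> 0) by (assert (0 < tau x) by (apply Htaup; lra); lra).
    assert (H := derivable_pt_lim_div dr tau x _ _ (Hr2 x Hx) (Htaud x Hx) Htx).
    unfold div_fct in H. exact H. }
  assert (Hdrs : forall x, 0 < x <= 1 -> dr x = s x * tau x).
  { intros x Hx. unfold s. field. assert (0 < tau x) by (apply Htaup; auto); lra. }
  assert (Hdtau_id : forall x, 0 < x < 1 -> dtau x = tau x * (df (r x) * s x - df x) / f x).
  { intros x Hx. assert (0 < f x) by (apply Hfp; lra). assert (0 < tau x) by (apply Htaup; lra).
    assert (0 < f (r x)) by (apply Hfp; apply Hrr; lra).
    unfold dtau, s, tau. unfold Rsqr. field. split; lra. }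
  assert (HINR : 0 < INR (n - 1)).
  { apply lt_0_INR. lia. }
  assert (Hkey : forall x, 0 < x < 1 ->
     (0 < df (r x) * s x - df x -> df (r x) * dphi (tau x) - df x * dphi (s x * tau x) < 0 -> d2r x < 0) /\
     (df (r x) * s x - df x < 0 -> 0 < df (r x) * dphi (tau x) - df x * dphi (s x * tau x) -> 0 < d2r x)).
  { intros x Hx. assert (Hfx : 0 < f x) by (apply Hfp; lra).
    assert (Ht : 0 < tau x) by (apply Htaup; lra).
    assert (Hdx : 0 < dr x) by (apply Hdrpos; lra).
    assert (HE := Heq x Hx). cbv zeta in HE. fold (tau x) in HE.
    set (T := tau x) in *. set (S := s x) in *.
    replace (dphi (dr x)) with (dphi (S * T)) in HE by (rewrite (Hdrs x ltac:(lra)); reflexivity).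
    set (A := d2phi (dr x)). set (Bh := d2h (dr x * T ^ (n - 1))).
    assert (HA : 0 <= A) by (apply Hd2phi; auto).
    assert (HBh : 0 <= Bh) by (apply Hd2h; apply Rmult_lt_0_compat; auto; apply pow_lt; auto).
    assert (HT1 : 0 < T ^ (2 * (n - 1))) by (apply pow_lt; auto).
    assert (HT2 : 0 < T ^ (2 * n - 3)) by (apply pow_lt; auto).
    assert (HC : df (r x) * dr x - df x * T = T * (df (r x) * S - df x)).
    { rewrite (Hdrs x ltac:(lra)). fold S T. ring. }
    rewrite HC in HE. fold A Bh in HE.
    assert (Hcoef : 0 <= f x * (A + Bh * T ^ (2 * (n - 1)))).
    { apply Rmult_le_pos; [lra|]. apply Rplus_le_le_0_compat; auto. apply Rmult_le_pos; lra. }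
    assert (HP : 0 <= Bh * dr x * T ^ (2 * n - 3)).
    { apply Rmult_le_pos; [apply Rmult_le_pos; lra| lra]. }
    split.
    - intros H1 H2. destruct (Rlt_or_le (d2r x) 0) as [|Hge]; auto. exfalso.
      assert (0 <= f x * (A + Bh * T ^ (2 * (n - 1))) * d2r x) by (apply Rmult_le_pos; auto).
      assert (0 < T * (df (r x) * S - df x)) by (apply Rmult_lt_0_compat; auto).
      assert (0 <= T * (df (r x) * S - df x) * Bh * dr x * T ^ (2 * n - 3)).
      { replace (T * (df (r x) * S - df x) * Bh * dr x * T ^ (2 * n - 3))
          with ((T * (df (r x) * S - df x)) * (Bh * dr x * T ^ (2 * n - 3))) by ring.
        apply Rmult_le_pos; lra. }
      assert (INR (n - 1) * (df (r x) * dphi T - df x * dphi (S * T)) < 0).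
      { replace 0 with (INR (n - 1) * 0) by ring. apply Rmult_lt_compat_l; auto. }
      assert (0 <= INR (n - 1) * (T * (df (r x) * S - df x)) * Bh * dr x * T ^ (2 * n - 3)).
      { replace (INR (n - 1) * (T * (df (r x) * S - df x)) * Bh * dr x * T ^ (2 * n - 3))
          with (INR (n - 1) * (T * (df (r x) * S - df x) * Bh * dr x * T ^ (2 * n - 3))) by ring.
        apply Rmult_le_pos; lra. }
      lra.
    - intros H1 H2. destruct (Rlt_or_le 0 (d2r x)) as [|Hge]; auto. exfalso.
      assert (f x * (A + Bh * T ^ (2 * (n - 1))) * d2r x <= 0).
      { replace (f x * (A + Bh * T ^ (2 * (n - 1))) * d2r x) with
          (- (f x * (A + Bh * T ^ (2 * (n - 1))) * (- d2r x))) by ring.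
        assert (0 <= f x * (A + Bh * T ^ (2 * (n - 1))) * (- d2r x)) by (apply Rmult_le_pos; lra). lra. }
      assert (0 < - (T * (df (r x) * S - df x))) by (assert (0 < T * (- (df (r x) * S - df x))) by (apply Rmult_lt_0_compat; lra); lra).
      assert (0 <= - (T * (df (r x) * S - df x)) * Bh * dr x * T ^ (2 * n - 3)).
      { replace (- (T * (df (r x) * S - df x)) * Bh * dr x * T ^ (2 * n - 3))
          with ((- (T * (df (r x) * S - df x))) * (Bh * dr x * T ^ (2 * n - 3))) by ring.
        apply Rmult_le_pos; lra. }
      assert (0 < INR (n - 1) * (df (r x) * dphi T - df x * dphi (S * T))).
      { apply Rmult_lt_0_compat; auto. }
      assert (0 <= - (INR (n - 1) * (T * (df (r x) * S - df x)) * Bh * dr x * T ^ (2 * n - 3))).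
      { replace (- (INR (n - 1) * (T * (df (r x) * S - df x)) * Bh * dr x * T ^ (2 * n - 3)))
          with (INR (n - 1) * (- (T * (df (r x) * S - df x)) * Bh * dr x * T ^ (2 * n - 3))) by ring.
        apply Rmult_le_pos; lra. }
      lra. }
  assert (Hr0 : 0 < r rho0 <= M) by (apply Hrr; auto).
  assert (Hr0le : forall x, 0 < x <= rho0 -> 0 < r x <= r rho0).
  { intros x Hx. split; [apply Hrpos; lra|]. destruct (Req_dec x rho0) as [->|]; [lra|].
    left; apply Hrinc; lra. }
  assert (HF : forall x, 0 < x <= rho0 ->
     b0 df (r rho0) <= df (r x) <= b1 df (r rho0) /\ b0 df rho0 <= df x <= b1 df rho0).
  { intros x Hx. assert (H1 := Hr0le x Hx).
    split; split; try (apply HB0; lra); try (apply HB1; lra). }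
  assert (Hb0r : 0 < b0 df (r rho0) <= 1) by (split; apply (HB0 (r rho0) 0); lra).
  assert (Hb0p : 0 < b0 df rho0 <= 1) by (split; apply (HB0 rho0 0); lra).
  assert (Hb1r : 1 <= b1 df (r rho0)) by (apply (HB1 (r rho0) 0); lra).
  assert (Hb1p : 1 <= b1 df rho0) by (apply (HB1 rho0 0); lra).
  assert (Hfrho : 0 < f rho0) by (apply Hfp; lra).
  assert (Hlim_tau : limit1_in tau (fun x => 0 < x <= 1) (tau rho0) rho0).
  { assert (Hlim_r : limit1_in r (fun x => 0 < x <= 1) (r rho0) rho0).
    { intros eps He. destruct (Hcr (rho0 / 2) ltac:(lra) rho0 ltac:(lra) eps He) as [d [Hd Hu]].
      exists (Rmin d (rho0 / 2)). split; [apply Rmin_pos; lra|].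
      intros x [Hx Hxd]. simpl in *. unfold R_dist in *.
      assert (Rabs (x - rho0) < d) by (eapply Rlt_le_trans; [exact Hxd|apply Rmin_l]).
      assert (Rabs (x - rho0) < rho0 / 2) by (eapply Rlt_le_trans; [exact Hxd|apply Rmin_r]).
      apply Hu; auto. unfold Rabs in H0; destruct Rcase_abs in H0; lra. }
    assert (Hcfr : continuity_pt f (r rho0)).
    { apply derivable_continuous_pt. exists (df (r rho0)). apply Hf'. lra. }
    assert (Hcfp : continuity_pt f rho0).
    { apply derivable_continuous_pt. exists (df rho0). apply Hf'. lra. }
    assert (H1 := limit_comp r f _ _ _ _ _ Hlim_r (cpt_lim f (r rho0) Hcfr)).
    apply (lim_dom _ _ (fun x => 0 < x <= 1)) in H1; [|intros x Hx; split; auto].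
    assert (H2 := lim_dom _ _ (fun x => 0 < x <= 1) _ _ (fun x _ => I) (cpt_lim f rho0 Hcfp)).
    assert (H3 := limit_inv _ _ _ _ H2 ltac:(lra)).
    exact (limit_mul _ _ _ _ _ _ H1 H3). }
  assert (Hlim_dr := Hdrc rho0 Hrho0).
  change (f (r rho0) / f rho0) with (tau rho0).
  split.
  - set (a := alpha0 df q0inv rho0 (r rho0)).
    destruct (Rle_or_lt (a * tau rho0) (dr rho0)) as [|Hlt]; auto. exfalso.
    assert (Ha1 : a <= b0 df rho0 / b1 df (r rho0)) by apply Rmin_l.
    set (y1 := b1 df rho0 / b0 df (r rho0)).
    assert (Ha2 : a <= q0inv y1) by apply Rmin_r.
    assert (Hy1 : 1 <= y1).
    { unfold y1. apply (Rmult_le_reg_r (b0 df (r rho0))); [lra|].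
      unfold Rdiv. rewrite Rmult_assoc, Rinv_l by lra. lra. }
    destruct (Hq0inv y1 Hy1) as [Hqi1 Hqi2].
    assert (Hk1 : b0 df rho0 / b1 df (r rho0) <= 1) by (apply Rdiv_le_1; lra).
    assert (Hsig : forall x, 0 < x <= rho0 -> x < 1 -> s x < a ->
       0 < d2r x /\ dtau x < 0 /\ 0 < ds x /\ df (r x) * (a - s x) <= df x - df (r x) * s x).
    { intros x Hx Hx1 HS. destruct (HF x Hx) as [[HF1a HF1b] [HF2a HF2b]].
      assert (Ht : 0 < tau x) by (apply Htaup; lra).
      assert (Hfx : 0 < f x) by (apply Hfp; lra).
      assert (Hdx : 0 < dr x) by (apply Hdrpos; lra).
      assert (HS0 : 0 < s x) by (unfold s; apply Rdiv_lt_0_compat; auto).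
      set (S := s x) in *. set (F1 := df (r x)) in *. set (F2 := df x) in *.
      assert (HS1 : S < 1) by lra.
      assert (HaF : a * F1 <= F2).
      { apply Rle_trans with (b0 df rho0 / b1 df (r rho0) * F1).
        - apply Rmult_le_compat_r; lra.
        - apply Rle_trans with (b0 df rho0 / b1 df (r rho0) * b1 df (r rho0)).
          + apply Rmult_le_compat_l; auto. left; apply Rdiv_lt_0_compat; lra.
          + apply Rle_trans with (b0 df rho0); [right; field; lra| lra]. }
      assert (Hdiff : F1 * (a - S) <= F2 - F1 * S) by nra.
      assert (Hdiffp : F1 * S - F2 < 0) by nra.
      assert (Hq : y1 < q0 S) by (rewrite <- Hqi2; apply Hq0dec; lra).
      assert (HQF : F2 < q0 S * F1).
      { apply Rle_lt_trans with (y1 * F1); [|apply Rmult_lt_compat_r; lra].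
        apply Rle_trans with (y1 * b0 df (r rho0)); [|apply Rmult_le_compat_l; lra].
        apply Rle_trans with (b1 df rho0); [lra|]. unfold y1; right; field; lra. }
      assert (Hbr := bracket_lo dphi t0 S (tau x) (q0 S) F1 F2 HA5 Hsign (Hq0 S HS0 ltac:(lra))
                       Ht HS0 HS1 ltac:(lra) ltac:(lra) ltac:(nra) HQF).
      assert (Hd2 : 0 < d2r x) by (apply (proj2 (Hkey x ltac:(lra))); auto).
      assert (Hdt : dtau x < 0).
      { rewrite Hdtau_id by lra. fold S F1 F2.
        assert (0 < tau x * - (F1 * S - F2) / f x) by (apply Rdiv_lt_0_compat; auto; apply Rmult_lt_0_compat; lra).
        replace (tau x * - (F1 * S - F2) / f x) with (- (tau x * (F1 * S - F2) / f x)) in H by (field; lra).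
        lra. }
      split; [auto|]. split; [auto|]. split; [|auto].
      unfold ds. assert (0 < (tau x)²) by (unfold Rsqr; nra).
      assert (0 < d2r x * tau x - dtau x * dr x) by nra.
      apply Rdiv_lt_0_compat; auto. }
    assert (Hlim_H := limit_minus _ _ _ _ _ _ (limit_mul _ _ _ _ _ _ (lim_const a _ rho0) Hlim_tau) Hlim_dr).
    destruct (pick_left (fun x => a * tau x - dr x) rho0 ltac:(lra) Hlim_H ltac:(lra) ltac:(lra)) as [y [Hy Hyp]].
    assert (Hty : 0 < tau y) by (apply Htaup; lra).
    assert (Hsy : s y < a).
    { unfold s. apply (Rmult_lt_reg_r (tau y)); auto. unfold Rdiv. rewrite Rmult_assoc, Rinv_l; lra. }
    assert (Hmono : forall x, 0 < x <= y -> s x <= s y).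
    { intros x Hx. destruct (Req_dec x y) as [->|Hne]; [lra|].
      cut (- s y <= - s x); [lra|].
      apply (barrier (fun z => - s z) (fun z => - ds z) (- a) x y); auto; try lra.
      intros z Hz; apply derivable_pt_lim_opp, Hsd; lra.
      intros z Hz Haz. assert (0 < ds z) by (apply (Hsig z); lra). lra. }
    assert (Hall : forall x, 0 < x <= y -> s x < a) by (intros x Hx; specialize (Hmono x Hx); lra).
    assert (Hdr_le : forall x, 0 < x <= y -> dr x <= dr y).
    { intros x Hx. apply (mono_ge dr d2r x y); try lra.
      apply (deriv_cont_in _ d2r). intros; apply Hr2; lra.
      intros; apply Hr2; lra. intros z Hz. left. apply (Hsig z); try lra. apply Hall; lra. }
    assert (Hrx : forall x, 0 < x <= y -> r x <= dr y * x).
    { apply (lin_upper r dr y (dr y)); try lra; auto. intros; apply Hr1; lra. }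
    assert (Hdy : 0 < dr y) by (apply Hdrpos; lra).
    set (C := b1 df (r rho0) * dr y / b0 df rho0).
    assert (Htau_ub : forall x, 0 < x <= y -> tau x <= C).
    { intros x Hx. assert (Hfx : 0 < f x) by (apply Hfp; lra).
      assert (Hfx2 : b0 df rho0 * x <= f x) by (apply Hflb; lra).
      assert (Hrx' := Hr0le x ltac:(lra)).
      assert (Hfr : f (r x) <= b1 df (r rho0) * r x) by (apply Hfub; lra).
      assert (Hrx2 := Hrx x Hx).
      unfold tau. apply (Rmult_le_reg_r (f x)); auto. unfold Rdiv. rewrite Rmult_assoc, Rinv_l by lra.
      assert (HC : C * (b0 df rho0 * x) = b1 df (r rho0) * (dr y * x)) by (unfold C; field; lra).
      assert (HC0 : 0 <= C) by (unfold C; left; apply Rdiv_lt_0_compat; nra).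
      apply Rle_trans with (C * (b0 df rho0 * x)).
      { rewrite HC. apply Rle_trans with (b1 df (r rho0) * r x); [lra| apply Rmult_le_compat_l; lra]. }
      apply Rmult_le_compat_l; lra. }
    assert (Htau_dec : forall x, 0 < x <= y -> tau y <= tau x).
    { intros x Hx. apply (mono_le tau dtau x y); try lra.
      apply (deriv_cont_in _ dtau). intros; apply Htaud; lra.
      intros; apply Htaud; lra. intros z Hz. left. apply (Hsig z); try lra. apply Hall; lra. }
    set (K := tau y * (b0 df (r rho0) * (a - s y)) / b1 df rho0).
    assert (HK : 0 < K).
    { unfold K. apply Rdiv_lt_0_compat; [|lra]. apply Rmult_lt_0_compat; auto. apply Rmult_lt_0_compat; lra. }
    apply (endgame_lo tau dtau y K C); try lra.
    + intros; apply Htaud; lra.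
    + intros x Hx. assert (Hfx : 0 < f x) by (apply Hfp; lra).
      assert (Hfx2 : f x <= b1 df rho0 * x) by (apply Hfub; lra).
      destruct (HF x ltac:(lra)) as [[HF1a HF1b] _].
      destruct (Hsig x ltac:(lra) ltac:(lra) (Hall x Hx)) as [_ [_ [_ Hd]]].
      assert (Hsx := Hmono x Hx).
      assert (Htx := Htau_dec x Hx).
      assert (Hdel : b0 df (r rho0) * (a - s y) <= df x - df (r x) * s x).
      { apply Rle_trans with (df (r x) * (a - s x)); auto.
        apply Rmult_le_compat; lra. }
      assert (Hdel0 : 0 < b0 df (r rho0) * (a - s y)) by (apply Rmult_lt_0_compat; lra).
      rewrite Hdtau_id by lra.
      cut (K / x <= tau x * (df x - df (r x) * s x) / f x).
      { intros Hc. replace (tau x * (df (r x) * s x - df x) / f x) with (- (tau x * (df x - df (r x) * s x) / f x)) by (field; lra). lra. }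
      apply (Rmult_le_reg_r (f x)); auto.
      replace (tau x * (df x - df (r x) * s x) / f x * f x) with (tau x * (df x - df (r x) * s x)) by (field; lra).
      apply Rle_trans with (tau y * (b0 df (r rho0) * (a - s y))).
      * apply Rle_trans with (K / x * (b1 df rho0 * x)).
        apply Rmult_le_compat_l; auto. left; apply Rdiv_lt_0_compat; lra.
        unfold K. right. field. lra.
      * apply Rmult_le_compat; lra.
    + exact Htau_ub.
  - set (a := alpha1 df q1inv rho0 (r rho0)).
    destruct (Rle_or_lt (dr rho0) (a * tau rho0)) as [|Hgt]; auto. exfalso.
    assert (Ha1 : b1 df rho0 / b0 df (r rho0) <= a) by apply Rmax_l.
    set (y0 := b0 df rho0 / b1 df (r rho0)).
    assert (Ha2 : q1inv y0 <= a) by apply Rmax_r.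
    assert (Hy0 : 0 < y0 <= 1).
    { unfold y0. split; [apply Rdiv_lt_0_compat; lra|]. apply Rdiv_le_1; lra. }
    destruct (Hq1inv y0 Hy0) as [Hqi1 Hqi2].
    assert (Hsig : forall x, 0 < x <= rho0 -> x < 1 -> a < s x ->
       d2r x < 0 /\ 0 < dtau x /\ ds x < 0 /\ df (r x) * (s x - a) <= df (r x) * s x - df x).
    { intros x Hx Hx1 HS. destruct (HF x Hx) as [[HF1a HF1b] [HF2a HF2b]].
      assert (Ht : 0 < tau x) by (apply Htaup; lra).
      assert (Hfx : 0 < f x) by (apply Hfp; lra).
      assert (Hdx : 0 < dr x) by (apply Hdrpos; lra).
      set (S := s x) in *. set (F1 := df (r x)) in *. set (F2 := df x) in *.
      assert (HS1 : 1 < S) by lra.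
      assert (Hk0 : 0 <= b1 df rho0 / b0 df (r rho0)) by (apply Rlt_le, Rdiv_lt_0_compat; lra).
      assert (HaF : F2 <= a * F1).
      { apply Rle_trans with (b1 df rho0 / b0 df (r rho0) * F1).
        - apply Rle_trans with (b1 df rho0 / b0 df (r rho0) * b0 df (r rho0)).
          + apply Rle_trans with (b1 df rho0); [lra|]. right. field. lra.
          + apply Rmult_le_compat_l; auto.
        - apply Rmult_le_compat_r; lra. }
      assert (Hdiff : F1 * (S - a) <= F1 * S - F2) by nra.
      assert (Hdiffp : 0 < F1 * S - F2) by nra.
      assert (Hq : q1 S < y0) by (rewrite <- Hqi2; apply Hq1dec; lra).
      assert (HQF : q1 S * F1 < F2).
      { apply Rlt_le_trans with (y0 * F1). apply Rmult_lt_compat_r; lra.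
        apply Rle_trans with (y0 * b1 df (r rho0)). apply Rmult_le_compat_l; lra.
        apply Rle_trans with (b0 df rho0); [unfold y0; right; field; lra| lra]. }
      assert (Hbr := bracket_up dphi t0 S (tau x) (q1 S) F1 F2 HA5 Hsign (Hq1 S ltac:(lra))
                       Ht HS1 ltac:(lra) ltac:(lra) ltac:(lra) HQF).
      assert (Hd2 : d2r x < 0) by (apply (proj1 (Hkey x ltac:(lra))); auto).
      assert (Hdt : 0 < dtau x).
      { rewrite Hdtau_id by lra. apply Rdiv_lt_0_compat; auto. apply Rmult_lt_0_compat; auto. }
      split; [auto|]. split; [auto|]. split; [|auto].
      unfold ds. assert (0 < (tau x)²) by (unfold Rsqr; nra).
      assert (d2r x * tau x - dtau x * dr x < 0) by nra.
      unfold Rdiv. assert (0 < / (tau x)²) by (apply Rinv_0_lt_compat; auto). nra. }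
    assert (Hlim_H := limit_minus _ _ _ _ _ _ Hlim_dr (limit_mul _ _ _ _ _ _ (lim_const a _ rho0) Hlim_tau)).
    destruct (pick_left (fun x => dr x - a * tau x) rho0 ltac:(lra) Hlim_H ltac:(lra) ltac:(lra)) as [y [Hy Hyp]].
    assert (Hty : 0 < tau y) by (apply Htaup; lra).
    assert (Hsy : a < s y).
    { unfold s. apply (Rmult_lt_reg_r (tau y)); auto. unfold Rdiv. rewrite Rmult_assoc, Rinv_l; lra. }
    assert (Hmono : forall x, 0 < x <= y -> s y <= s x).
    { intros x Hx. destruct (Req_dec x y) as [->|Hne]; [lra|].
      apply (barrier s ds a x y); auto; try lra.
      intros z Hz; apply Hsd; lra.
      intros z Hz Haz. left. apply (Hsig z); lra. }
    assert (Hall : forall x, 0 < x <= y -> a < s x) by (intros x Hx; specialize (Hmono x Hx); lra).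
    assert (Hdr_ge : forall x, 0 < x <= y -> dr y <= dr x).
    { intros x Hx. apply (mono_le dr d2r x y); try lra.
      apply (deriv_cont_in _ d2r). intros; apply Hr2; lra.
      intros; apply Hr2; lra. intros z Hz. left. apply (Hsig z); try lra. apply Hall; lra. }
    assert (Hrx : forall x, 0 < x <= y -> dr y * x <= r x).
    { apply (lin_lower r dr y (dr y)); try lra; auto. intros; apply Hr1; lra. }
    assert (Hdy : 0 < dr y) by (apply Hdrpos; lra).
    set (c1 := b0 df (r rho0) * dr y / b1 df rho0).
    assert (Hc1 : 0 < c1) by (unfold c1; apply Rdiv_lt_0_compat; [apply Rmult_lt_0_compat|]; lra).
    assert (Htau_lb : forall x, 0 < x <= y -> c1 <= tau x).
    { intros x Hx. assert (Hfx : 0 < f x) by (apply Hfp; lra).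
      assert (Hfx2 : f x <= b1 df rho0 * x) by (apply Hfub; lra).
      assert (Hrx' := Hr0le x ltac:(lra)).
      assert (Hfr : b0 df (r rho0) * r x <= f (r x)) by (apply Hflb; lra).
      assert (Hrx2 := Hrx x Hx).
      unfold tau. apply (Rmult_le_reg_r (f x)); auto. unfold Rdiv. rewrite Rmult_assoc, Rinv_l by lra.
      apply Rle_trans with (c1 * (b1 df rho0 * x)). apply Rmult_le_compat_l; lra.
      unfold c1. replace (b0 df (r rho0) * dr y / b1 df rho0 * (b1 df rho0 * x)) with
        (b0 df (r rho0) * (dr y * x)) by (field; lra).
      apply Rle_trans with (b0 df (r rho0) * r x); [apply Rmult_le_compat_l; lra| lra]. }
    set (K := c1 * (b0 df (r rho0) * (s y - a)) / b1 df rho0).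
    assert (HK : 0 < K).
    { unfold K. apply Rdiv_lt_0_compat; [|lra]. apply Rmult_lt_0_compat; auto. apply Rmult_lt_0_compat; lra. }
    apply (endgame_up tau dtau y K); try lra.
    + intros; apply Htaud; lra.
    + intros x Hx. assert (Hfx : 0 < f x) by (apply Hfp; lra).
      assert (Hfx2 : f x <= b1 df rho0 * x) by (apply Hfub; lra).
      destruct (HF x ltac:(lra)) as [[HF1a HF1b] _].
      destruct (Hsig x ltac:(lra) ltac:(lra) (Hall x Hx)) as [_ [_ [_ Hd]]].
      assert (Hsx := Hmono x Hx).
      assert (Htx := Htau_lb x Hx).
      assert (Hdel : b0 df (r rho0) * (s y - a) <= df (r x) * s x - df x).
      { apply Rle_trans with (df (r x) * (s x - a)); auto.
        apply Rmult_le_compat; lra. }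
      assert (Hdel0 : 0 < b0 df (r rho0) * (s y - a)) by (apply Rmult_lt_0_compat; lra).
      rewrite Hdtau_id by lra.
      apply (Rmult_le_reg_r (f x)); auto.
      replace (tau x * (df (r x) * s x - df x) / f x * f x) with (tau x * (df (r x) * s x - df x)) by (field; lra).
      apply Rle_trans with (c1 * (b0 df (r rho0) * (s y - a))).
      * apply Rle_trans with (K / x * (b1 df rho0 * x)).
        apply Rmult_le_compat_l; auto. left; apply Rdiv_lt_0_compat; lra.
        unfold K. right. field. lra.
      * apply Rmult_le_compat; lra.
    + intros; apply Htaup; lra.
Qed.
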